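(* Assume conditions (C1)–(C5). Then for every $\zeta=\{\zeta_k\}_{k\in\mathbb Z}\in\Theta$ the impulsive system $(I_\zeta)$ has a unique solution $\phi_\zeta(s)=\{\phi^{ij}_\zeta(s)\}$ defined on all of $\mathbb R$ and satisfying $\sup_{s\in\mathbb R}\|\phi_\zeta(s)\|\le H_0$.
   Context: Fix integers $m,n\ge1$ and $r\ge0$. Cells are indexed by pairs $(i,j)$, $1\le i\le m$, $1\le j\le n$. The $r$-neighbourhood of $(i,j)$ is $N_r(i,j)=\{(h,l):1\le h\le m,\ 1\le l\le n,\ \max(|h-i|,|l-j|)\le r\}$. Fix constants $a_{ij}>0$, $C^{hl}_{ij}\ge0$, and a continuous function $f:\mathbb R\to\mathbb R$. Vectors of $\mathbb R^{mn}$ are written $v=\{v_{ij}\}$, with norm $\|v\|=\max_{(i,j)}|v_{ij}|$. Time scale: $\{\theta_k\}_{k\in\mathbb Z}$ is strictly increasing, $\theta_{-1}<0<\theta_0$, and there exist $\omega>0$ and $p\in\mathbb N$ with $\theta_{k+2p}=\theta_k+\omega$ for all $k$. Set $\mathbb T_0=\bigcup_{k\in\mathbb Z}[\theta_{2k-1},\theta_{2k}]$, $\delta_k=\theta_{2k+1}-\theta_{2k}$, $\eta_k=\theta_{2k}-\theta_{2k-1}$ (both $p$-periodic in $k$), $\delta=\max_{1\le k\le p}\delta_k$. On $\mathbb T_0'=\mathbb T_0\setminus\{\theta_{2k-1}:k\in\mathbb Z\}$ define $\psi(t)=t-\sum_{0<\theta_{2k}<t}\delta_k$ for $t\ge0$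 and $\psi(t)=t+\sum_{t\le\theta_{2k}<0}\delta_k$ for $t<0$; put $s_k=\psi(\theta_{2k})$, so $s_k-s_{k-1}=\eta_k$, and write $\psi(\omega):=\omega-\sum_{k=1}^p\delta_k=\sum_{k=1}^p\eta_k$, so $s_{k+p}=s_k+\psi(\omega)$. Inputs: $\Lambda\subset\mathbb R^{mn}$ is compact and $F:\Lambda\to\Lambda$ is continuous. $\Theta$ is the set of all sequences $\zeta=\{\zeta_k\}_{k\in\mathbb Z}$, $\zeta_k=\{\zeta^{ij}_k\}\in\Lambda$, with $\zeta_{k+1}=F(\zeta_k)$ for all $k\in\mathbb Z$. Impulsive system $(I_\zeta)$: for $s\in(s_{k-1},s_k)$, $y_{ij}'(s)=-a_{ij}y_{ij}(s)-\sum_{(h,l)\in N_r(i,j)}C^{hl}_{ij}f(y_{hl}(s))y_{ij}(s)+\zeta^{ij}_k$, and at $s=s_k$, $y_{ij}(s_k+)-y_{ij}(s_k)=-\delta_ka_{ij}y_{ij}(s_k)-\delta_k\sum_{(h,l)\in N_r(i,j)}C^{hl}_{ij}f(y_{hl}(s_k))y_{ij}(s_k)+\delta_k\zeta^{ij}_k$, where $y(s_k+)=\lim_{s\to s_k^+}y(s)$. Solutions are left-continuous, continuous except for discontinuities of the first kind at the points $s_k$. Let $u_{ij}(s,\tau)=e^{-a_{ij}(s-\tau)}\prod_{\nu=l}^{k}(1-\delta_\nu a_{ij})$ if $s_{l-1}<\tau\le s_l$, $s_k<s\le s_{k+1}$, $k\ge l$, and $u_{ij}(s,\tau)=e^{-a_{ij}(s-\tau)}$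 if $s_k<\tau\le s\le s_{k+1}$. Let $\lambda_{ij}=a_{ij}-\frac1{\psi(\omega)}\sum_{\nu=0}^{p-1}\ln|1-\delta_\nu a_{ij}|$, $\lambda=\min_{(i,j)}\lambda_{ij}$. Conditions: (C1) $\delta_ka_{ij}\ne1$ for all $i,j,k$; (C2) $\lambda>0$; (C3) $\sup_{s\in\mathbb R}|f(s)|\le M_f$ for some $M_f>0$; (C4) $|f(s_1)-f(s_2)|\le L_f|s_1-s_2|$ for all $s_1,s_2$, for some $L_f>0$. Under (C1),(C2) fix positive numbers $K_{ij}$ with $|u_{ij}(s,\tau)|\le K_{ij}e^{-\lambda_{ij}(s-\tau)}$ for $s\ge\tau$, and put $K=\max K_{ij}$. Define $\bar c=\max_{(i,j)}\big(\frac{K_{ij}}{\lambda_{ij}}+\frac{p\delta K_{ij}}{1-e^{-\lambda_{ij}\psi(\omega)}}\big)\sum_{(h,l)\in N_r(i,j)}C^{hl}_{ij}$, $M_F=\max_{\eta\in\Lambda}\|F(\eta)\|$, and (when $M_f\bar c<1$) $H_0=\frac{M_F}{1-M_f\bar c}\max_{(i,j)}\big(\frac{K_{ij}}{\lambda_{ij}}+\frac{p\delta K_{ij}}{1-e^{-\lambda_{ij}\psi(\omega)}}\big)$, $\bar d=(M_f+H_0L_f)\max_{(i,j)}K_{ij}\sum_{(h,l)\in N_r(i,j)}C^{hl}_{ij}$. (C5) $(M_f+H_0L_f)\bar c<1$ (this includes $M_f\bar c<1$). *)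

(* Defs.v *)
From Stdlib Require Import Reals Lra Lia ZArith List.
Open Scope R_scope.

(* A vector of R^{mn}, v = {v_ij}, is represented by v : nat -> nat -> R;
   only the entries with 1 <= i <= m, 1 <= j <= n are meaningful. *)
Definition Vec := nat -> nat -> R.

Definition cells (m n : nat) : list (nat * nat) := list_prod (seq 1 m) (seq 1 n).

Definition in_cells (m n i j : nat) : Prop := (1 <= i <= m)%nat /\ (1 <= j <= n)%nat.

Definition vnorm (m n : nat) (v : Vec) : R :=
  fold_right Rmax 0 (map (fun ij => Rabs (v (fst ij) (snd ij))) (cells m n)).

Definition vsub (v w : Vec) : Vec := fun i j => v i j - w i j.

Definition veq (m n : nat) (v w : Vec) : Prop :=
  forall i j, in_cells m n i j -> v i j = w i j.

(* max / min over all cells (i,j); exact since (1,1) is a cell when m,n >= 1 *)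
Definition maxij (m n : nat) (g : nat -> nat -> R) : R :=
  fold_right Rmax (g 1%nat 1%nat) (map (fun ij => g (fst ij) (snd ij)) (cells m n)).
Definition minij (m n : nat) (g : nat -> nat -> R) : R :=
  fold_right Rmin (g 1%nat 1%nat) (map (fun ij => g (fst ij) (snd ij)) (cells m n)).

(* (h,l) in N_r(i,j): max(|h-i|,|l-j|) <= r  (|x-y| via truncated subtractions) *)
Definition in_nbhd (r i j : nat) (hl : nat * nat) : bool :=
  (Nat.leb (fst hl - i) r && Nat.leb (i - fst hl) r &&
   Nat.leb (snd hl - j) r && Nat.leb (j - snd hl) r)%bool.

Definition nbsum (m n r i j : nat) (g : nat -> nat -> R) : R :=
  fold_right Rplus 0
    (map (fun hl => g (fst hl) (snd hl)) (filter (in_nbhd r i j) (cells m n))).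

Definition sumZ (g : Z -> R) (a : Z) (N : nat) : R :=
  fold_right Rplus 0 (map (fun i => g (a + Z.of_nat i)%Z) (seq 0 N)).
Definition prodZ (g : Z -> R) (a : Z) (N : nat) : R :=
  fold_right Rmult 1 (map (fun i => g (a + Z.of_nat i)%Z) (seq 0 N)).

Definition delta (th : Z -> R) (k : Z) : R := th (2 * k + 1)%Z - th (2 * k)%Z.
Definition eta (th : Z -> R) (k : Z) : R := th (2 * k)%Z - th (2 * k - 1)%Z.

(* s_k = psi(theta_{2k}), with psi as in the paper:
   k >= 0 : psi(theta_{2k}) = theta_{2k} - sum_{0 < theta_{2j} < theta_{2k}} delta_j
                            = theta_{2k} - (delta_0 + ... + delta_{k-1})
   k < 0  : psi(theta_{2k}) = theta_{2k} + sum_{theta_{2k} <= theta_{2j} < 0} delta_j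
                            = theta_{2k} + (delta_k + ... + delta_{-1})
   (using that theta is strictly increasing with theta_{-1} < 0 < theta_0). *)
Definition sk (th : Z -> R) (k : Z) : R :=
  if (0 <=? k)%Z then th (2 * k)%Z - sumZ (delta th) 0 (Z.to_nat k)
  else th (2 * k)%Z + sumZ (delta th) k (Z.to_nat (- k)).

Definition psiw (th : Z -> R) (p : nat) : R := sumZ (eta th) 1 p.

Definition deltamax (th : Z -> R) (p : nat) : R :=
  fold_right Rmax (delta th 1) (map (fun k => delta th (Z.of_nat k)) (seq 1 p)).

Definition lam_ij (th : Z -> R) (p : nat) (a : R) : R :=
  a - (1 / psiw th p) * sumZ (fun nu => ln (Rabs (1 - delta th nu * a))) 0 p.

Definition lam (m n : nat) (th : Z -> R) (p : nat) (A : nat -> nat -> R) : R :=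
  minij m n (fun i j => lam_ij th p (A i j)).

(* u_ij(s,tau) = v, for a = a_ij (the two defining cases of u_ij) *)
Definition u_val (th : Z -> R) (a s tau v : R) : Prop :=
  (exists k l : Z, (l <= k)%Z /\ sk th (l - 1) < tau <= sk th l /\
      sk th k < s <= sk th (k + 1) /\
      v = exp (- a * (s - tau)) *
          prodZ (fun nu => 1 - delta th nu * a) l (Z.to_nat (k - l + 1)))
  \/ (exists k : Z, sk th k < tau /\ tau <= s /\ s <= sk th (k + 1) /\
      v = exp (- a * (s - tau))).

Definition coefK (th : Z -> R) (p : nat) (a Kij : R) : R :=
  Kij / lam_ij th p a +
  INR p * deltamax th p * Kij / (1 - exp (- lam_ij th p a * psiw th p)).

(* C i j h l stands for C^{hl}_{ij} *)
Definition cbar (m n r : nat) (th : Z -> R) (p : nat) (A : nat -> nat -> R)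
  (C : nat -> nat -> nat -> nat -> R) (K : nat -> nat -> R) : R :=
  maxij m n (fun i j => coefK th p (A i j) (K i j) * nbsum m n r i j (fun h l => C i j h l)).

Definition H0 (m n r : nat) (th : Z -> R) (p : nat) (A : nat -> nat -> R)
  (C : nat -> nat -> nat -> nat -> R) (K : nat -> nat -> R) (MF Mf : R) : R :=
  MF / (1 - Mf * cbar m n r th p A C K) * maxij m n (fun i j => coefK th p (A i j) (K i j)).

Definition compactV (m n : nat) (L : Vec -> Prop) : Prop :=
  forall x : nat -> Vec, (forall k, L (x k)) ->
  exists (phi : nat -> nat) (l : Vec),
    (forall k, (phi k < phi (S k))%nat) /\ L l /\
    forall eps, 0 < eps -> exists N, forall k, (N <= k)%nat ->
      vnorm m n (vsub (x (phi k)) l) < eps.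

Definition contV_on (m n : nat) (L : Vec -> Prop) (F : Vec -> Vec) : Prop :=
  forall v, L v -> forall eps, 0 < eps -> exists d, 0 < d /\
    forall w, L w -> vnorm m n (vsub w v) < d -> vnorm m n (vsub (F w) (F v)) < eps.

Definition in_Theta (m n : nat) (L : Vec -> Prop) (F : Vec -> Vec) (zeta : Z -> Vec) : Prop :=
  (forall k, L (zeta k)) /\ (forall k, veq m n (zeta (k + 1)%Z) (F (zeta k))).

Definition left_cont (g : R -> R) (t : R) : Prop :=
  forall eps, 0 < eps -> exists d, 0 < d /\
    forall x, t - d < x <= t -> Rabs (g x - g t) < eps.

Definition right_lim (g : R -> R) (t L : R) : Prop :=
  forall eps, 0 < eps -> exists d, 0 < d /\
    forall x, t < x < t + d -> Rabs (g x - L) < eps.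

Definition Nl (m n r : nat) (C : nat -> nat -> nat -> nat -> R) (f : R -> R)
  (y : Vec) (i j : nat) : R :=
  nbsum m n r i j (fun h l => C i j h l * f (y h l)) * y i j.

Definition is_solution (m n r : nat) (A : nat -> nat -> R)
  (C : nat -> nat -> nat -> nat -> R) (f : R -> R) (th : Z -> R)
  (zeta : Z -> Vec) (y : R -> Vec) : Prop :=
  forall i j, in_cells m n i j ->
    (forall (k : Z) (t : R), sk th (k - 1) < t < sk th k ->
       derivable_pt_lim (fun x => y x i j) t
         (- A i j * y t i j - Nl m n r C f (y t) i j + zeta k i j)) /\
    (forall t, (forall k, t <> sk th k) -> continuity_pt (fun x => y x i j) t) /\
    (forall k, left_cont (fun x => y x i j) (sk th k)) /\
    (forall k, exists L, right_lim (fun x => y x i j) (sk th k) L /\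
       L - y (sk th k) i j =
         - delta th k * A i j * y (sk th k) i j
         - delta th k * Nl m n r C f (y (sk th k)) i j
         + delta th k * zeta k i j).

(* Main.v *)
From Stdlib Require Import Reals Lra Lia ZArith List ClassicalEpsilon.
From Coquelicot Require Import Coquelicot.
Require Import Defs.
From Stdlib Require Import Reals ZArith List.
Open Scope R_scope.

Lemma fold_plus_c : forall (l : list R) c, fold_right Rplus c l = fold_right Rplus 0 l + c.
Proof. induction l; intros; simpl; [lra|rewrite IHl; lra]. Qed.
Lemma fold_mult_c : forall (l : list R) c, fold_right Rmult c l = fold_right Rmult 1 l * c.
Proof. induction l; intros; simpl; [lra|rewrite IHl; ring]. Qed.

Lemma sumZ_S : forall g a N, sumZ g a (S N) = sumZ g a N + g (a + Z.of_nat N)%Z.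
Proof.
  intros. unfold sumZ. rewrite seq_S, map_app, fold_right_app. simpl.
  rewrite fold_plus_c. lra.
Qed.

Lemma sumZ_S' : forall g a N, sumZ g a (S N) = g a + sumZ g (a + 1)%Z N.
Proof.
  intros. unfold sumZ. simpl. rewrite Z.add_0_r. f_equal.
  rewrite <- seq_shift, map_map. f_equal. apply map_ext. intros i.
  f_equal. rewrite Nat2Z.inj_succ. lia.
Qed.

Lemma prodZ_S' : forall g a N, prodZ g a (S N) = g a * prodZ g (a + 1)%Z N.
Proof.
  intros. unfold prodZ. simpl. rewrite Z.add_0_r. f_equal.
  rewrite <- seq_shift, map_map. f_equal. apply map_ext. intros i.
  f_equal. rewrite Nat2Z.inj_succ. lia.
Qed.

Lemma prodZ_S : forall g a N, prodZ g a (S N) = prodZ g a N * g (a + Z.of_nat N)%Z.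
Proof.
  intros. unfold prodZ. rewrite seq_S, map_app, fold_right_app. simpl.
  rewrite fold_mult_c. ring.
Qed.

Lemma prodZ_0 : forall g a, prodZ g a 0 = 1.
Proof. reflexivity. Qed.

Lemma sumZ_0 : forall g a, sumZ g a 0 = 0.
Proof. reflexivity. Qed.

Lemma sumZ_shift1 : forall g c N,
  sumZ g (c + 1)%Z N = sumZ g c N + g (c + Z.of_nat N)%Z - g c.
Proof.
  intros. pose proof (sumZ_S g c N). pose proof (sumZ_S' g c N). lra.
Qed.

Lemma fold_max_ge_d : forall l d, d <= fold_right Rmax d l.
Proof. induction l; intros; simpl; [lra|]. eapply Rle_trans; [apply IHl|apply Rmax_r]. Qed.

Lemma fold_max_in : forall l d x, In x l -> x <= fold_right Rmax d l.
Proof.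
  induction l; intros d x H; simpl in *; [contradiction|].
  destruct H as [<-|H]; [apply Rmax_l|].
  eapply Rle_trans; [apply (IHl d x H)|apply Rmax_r].
Qed.

Lemma per_shift : forall (g : Z -> R) (P : Z), (forall x, g (x + P)%Z = g x) ->
  forall q x, g (x + P * q)%Z = g x.
Proof.
  intros g P HP.
  assert (Hn : forall n : nat, forall x, g (x + P * Z.of_nat n)%Z = g x).
  { induction n; intros x.
    - f_equal. lia.
    - rewrite Nat2Z.inj_succ. replace (x + P * Z.succ (Z.of_nat n))%Z with ((x + P * Z.of_nat n) + P)%Z by lia.
      rewrite HP. apply IHn. }
  intros q x. destruct (Z_le_gt_dec 0 q).
  - rewrite <- (Z2Nat.id q) by lia. apply Hn.
  - pose proof (Hn (Z.to_nat (- q)) (x + P * q)%Z) as H.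
    rewrite Z2Nat.id in H by lia.
    replace (x + P * q + P * - q)%Z with x in H by lia. auto.
Qed.

Section TimeScale.
Variables (th : Z -> R) (omega : R) (p : nat).
Hypothesis Hth_inc : forall k, th k < th (k + 1)%Z.
Hypothesis Homega : 0 < omega.
Hypothesis Hper : forall k, th (k + 2 * Z.of_nat p)%Z = th k + omega.

Lemma p_pos : (1 <= p)%nat.
Proof.
  destruct p; [|lia]. exfalso. specialize (Hper 0%Z). simpl in Hper.
  lra.
Qed.

Lemma eta_pos : forall k, 0 < eta th k.
Proof.
  intros. unfold eta. pose proof (Hth_inc (2 * k - 1)%Z).
  replace (2 * k - 1 + 1)%Z with (2 * k)%Z in H by lia. lra.
Qed.

Lemma delta_pos : forall k, 0 < delta th k.
Proof.
  intros. unfold delta. pose proof (Hth_inc (2 * k)%Z). lra.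
Qed.

Lemma sk_step : forall k, sk th k - sk th (k - 1) = eta th k.
Proof.
  intros k. unfold sk, eta.
  destruct (Z_le_gt_dec 1 k).
  - assert (E1: (0 <=? k)%Z = true) by (apply Z.leb_le; lia).
    assert (E2: (0 <=? k - 1)%Z = true) by (apply Z.leb_le; lia).
    rewrite E1, E2.
    replace (Z.to_nat k) with (S (Z.to_nat (k - 1))).
    2:{ rewrite <- Z2Nat.inj_succ by lia. f_equal. lia. }
    rewrite sumZ_S. rewrite Z2Nat.id by lia. unfold delta.
    replace (0 + (k - 1))%Z with (k - 1)%Z by lia.
    replace (2 * (k - 1) + 1)%Z with (2 * k - 1)%Z by lia. lra.
  - destruct (Z.eq_dec k 0).
    + subst. simpl. unfold sumZ. simpl. unfold delta. simpl. lra.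
    + assert (E1: (0 <=? k)%Z = false) by (apply Z.leb_gt; lia).
      assert (E2: (0 <=? k - 1)%Z = false) by (apply Z.leb_gt; lia).
      rewrite E1, E2.
      replace (Z.to_nat (- (k - 1))) with (S (Z.to_nat (- k))).
      2:{ rewrite <- Z2Nat.inj_succ by lia. f_equal. lia. }
      rewrite sumZ_S'. replace (k - 1 + 1)%Z with k by lia. unfold delta.
      replace (2 * (k - 1) + 1)%Z with (2 * k - 1)%Z by lia. lra.
Qed.

Lemma sk_succ : forall k, sk th (k + 1) = sk th k + eta th (k + 1).
Proof.
  intros. pose proof (sk_step (k + 1)). replace (k + 1 - 1)%Z with k in H by lia. lra.
Qed.

Lemma sk_lt_S : forall k (n : nat), sk th k < sk th (k + Z.of_nat (S n)).
Proof.
  intros k n. induction n.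
  - simpl. replace (k + 1)%Z with (k + 1)%Z by lia. rewrite sk_succ. pose proof (eta_pos (k+1)). lra.
  - rewrite Nat2Z.inj_succ. replace (k + Z.succ (Z.of_nat (S n)))%Z with ((k + Z.of_nat (S n)) + 1)%Z by lia.
    rewrite sk_succ. pose proof (eta_pos (k + Z.of_nat (S n) + 1)). lra.
Qed.

Lemma sk_lt : forall k k', (k < k')%Z -> sk th k < sk th k'.
Proof.
  intros. pose proof (sk_lt_S k (Z.to_nat (k' - k - 1))).
  rewrite Nat2Z.inj_succ, Z2Nat.id in H0 by lia.
  replace (k + Z.succ (k' - k - 1))%Z with k' in H0 by lia. auto.
Qed.

Lemma sk_le : forall k k', (k <= k')%Z -> sk th k <= sk th k'.
Proof.
  intros. destruct (Z.eq_dec k k'); [subst; lra|]. left. apply sk_lt. lia.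
Qed.

Lemma eta_per : forall k, eta th (k + Z.of_nat p) = eta th k.
Proof.
  intros. unfold eta.
  replace (2 * (k + Z.of_nat p) - 1)%Z with ((2 * k - 1) + 2 * Z.of_nat p)%Z by lia.
  replace (2 * (k + Z.of_nat p))%Z with (2 * k + 2 * Z.of_nat p)%Z by lia.
  rewrite !Hper. lra.
Qed.

Lemma delta_per : forall k, delta th (k + Z.of_nat p) = delta th k.
Proof.
  intros. unfold delta.
  replace (2 * (k + Z.of_nat p) + 1)%Z with ((2 * k + 1) + 2 * Z.of_nat p)%Z by lia.
  replace (2 * (k + Z.of_nat p))%Z with (2 * k + 2 * Z.of_nat p)%Z by lia.
  rewrite !Hper. lra.
Qed.

Lemma sk_plus_nat : forall k (N : nat), sk th (k + Z.of_nat N) - sk th k = sumZ (eta th) (k + 1) N.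
Proof.
  intros k N. induction N.
  - simpl. rewrite Z.add_0_r, sumZ_0. lra.
  - rewrite sumZ_S, Nat2Z.inj_succ.
    replace (k + Z.succ (Z.of_nat N))%Z with ((k + Z.of_nat N) + 1)%Z by lia.
    rewrite sk_succ. replace (k + 1 + Z.of_nat N)%Z with (k + Z.of_nat N + 1)%Z by lia. lra.
Qed.

Lemma sumZ_eta_const : forall c, sumZ (eta th) c p = psiw th p.
Proof.
  assert (H1 : forall c, sumZ (eta th) (c + 1) p = sumZ (eta th) c p).
  { intros. rewrite sumZ_shift1, eta_per. lra. }
  assert (H : forall c, sumZ (eta th) c p = sumZ (eta th) 0 p).
  { intros c. induction c using Z.peano_ind.
    - reflexivity.
    - rewrite <- Z.add_1_r, H1. auto.
    - rewrite <- IHc. replace c with (Z.pred c + 1)%Z at 2 by lia. rewrite H1. auto. }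
  intros. unfold psiw. rewrite (H c), (H 1%Z). auto.
Qed.

Lemma sk_period : forall k, sk th (k + Z.of_nat p) = sk th k + psiw th p.
Proof.
  intros. pose proof (sk_plus_nat k p). rewrite sumZ_eta_const in H. lra.
Qed.

Lemma psiw_pos : 0 < psiw th p.
Proof.
  pose proof (sk_period 0). pose proof p_pos.
  pose proof (sk_lt 0 (0 + Z.of_nat p)). lra || (assert (0 < 0 + Z.of_nat p)%Z by lia; specialize (H1 H2); lra).
Qed.

Lemma sk_period_mult : forall k (q : nat), sk th (k + Z.of_nat p * Z.of_nat q) = sk th k + INR q * psiw th p.
Proof.
  intros k q. induction q.
  - simpl. rewrite Z.mul_0_r, Z.add_0_r. lra.
  - rewrite Nat2Z.inj_succ, S_INR.
    replace (k + Z.of_nat p * Z.succ (Z.of_nat q))%Z with ((k + Z.of_nat p * Z.of_nat q) + Z.of_nat p)%Z by lia.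
    rewrite sk_period. lra.
Qed.

Lemma delta_le_max : forall k, delta th k <= deltamax th p.
Proof.
  intros k. pose proof p_pos as Hp.
  set (P := Z.of_nat p).
  assert (HP : (P > 0)%Z) by (unfold P; lia).
  set (r := (1 + (k - 1) mod P)%Z).
  set (q := ((k - 1) / P)%Z).
  assert (Hk : k = (r + P * q)%Z).
  { unfold r, q. pose proof (Z.div_mod (k - 1) P). lia. }
  assert (Hr : (1 <= r <= P)%Z).
  { unfold r. pose proof (Z.mod_pos_bound (k - 1) P). lia. }
  rewrite Hk. rewrite (per_shift (delta th) P) by (intro; apply delta_per).
  unfold deltamax. apply fold_max_in.
  replace r with (Z.of_nat (Z.to_nat r)) by (apply Z2Nat.id; lia).
  apply (in_map (fun k0 : nat => delta th (Z.of_nat k0))).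
  apply in_seq. unfold P in Hr. lia.
Qed.

Lemma deltamax_pos : 0 < deltamax th p.
Proof. eapply Rlt_le_trans; [apply (delta_pos 1)|apply delta_le_max]. Qed.

End TimeScale.

Lemma cont_eps : forall f x, continuity_pt f x <->
  (forall eps, 0 < eps -> exists d, 0 < d /\ forall y, Rabs (y - x) < d -> Rabs (f y - f x) < eps).
Proof.
  intros f x. unfold continuity_pt, continue_in, limit1_in, limit_in. simpl. unfold R_dist. split.
  - intros Hc eps Heps. destruct (Hc eps Heps) as [d [Hd H1]]. exists d. split; auto.
    intros y Hy. destruct (Req_dec y x).
    + subst. rewrite Rminus_diag, Rabs_R0. auto.
    + apply H1. split; auto. split; [exact I|auto].
  - intros Hc eps Heps. destruct (Hc eps Heps) as [d [Hd H1]]. exists d. split; auto.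
    intros y [_ Hy]. auto.
Qed.

Lemma bound_at_left : forall f x d B, continuity_pt f x -> 0 < d ->
  (forall y, x < y < x + d -> Rabs (f y) <= B) -> Rabs (f x) <= B.
Proof.
  intros f x d B Hc Hd Hb. destruct (Rle_dec (Rabs (f x)) B) as [|Hn]; auto. exfalso.
  apply Rnot_le_lt in Hn. rewrite cont_eps in Hc.
  destruct (Hc (Rabs (f x) - B)) as [e [He H]]; [lra|].
  set (y := x + Rmin e d / 2).
  assert (Hm : 0 < Rmin e d) by (apply Rmin_pos; auto).
  assert (Hy1 : x < y < x + d) by (unfold y; pose proof (Rmin_r e d); lra).
  specialize (Hb y Hy1). assert (Rabs (y - x) < e) by (unfold y; rewrite Rabs_right; pose proof (Rmin_l e d); lra).
  specialize (H y H0). pose proof (Rabs_triang_inv (f x) (f y)).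
  rewrite <- Rabs_Ropp in H. replace (- (f y - f x)) with (f x - f y) in H by ring. lra.
Qed.

Lemma rlim_bound : forall g t L d B, right_lim g t L -> 0 < d ->
  (forall y, t < y < t + d -> Rabs (g y) <= B) -> Rabs L <= B.
Proof.
  intros g t L d B Hl Hd Hb. destruct (Rle_dec (Rabs L) B) as [|Hn]; auto. exfalso.
  apply Rnot_le_lt in Hn.
  destruct (Hl (Rabs L - B)) as [e [He H]]; [lra|].
  set (y := t + Rmin e d / 2).
  assert (Hm : 0 < Rmin e d) by (apply Rmin_pos; auto).
  assert (Hy1 : t < y < t + d) by (unfold y; pose proof (Rmin_r e d); lra).
  assert (Hy2 : t < y < t + e) by (unfold y; pose proof (Rmin_l e d); lra).
  specialize (Hb y Hy1). specialize (H y Hy2). pose proof (Rabs_triang_inv L (g y)).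
  rewrite <- Rabs_Ropp in H. replace (- (g y - L)) with (L - g y) in H by ring. lra.
Qed.

Lemma lim_eps : forall x y c e0, 0 <= y -> 0 < e0 ->
  (forall e, 0 < e <= e0 -> x <= y * exp (c * e)) -> x <= y.
Proof.
  intros x y c e0 Hy He0 H.
  destruct (Rle_dec c 0).
  - specialize (H e0 (conj He0 (Rle_refl _))).
    assert (exp (c * e0) <= 1).
    { rewrite <- exp_0. destruct (Req_dec (c * e0) 0) as [E|E]; [rewrite E; lra|].
      left. apply exp_increasing. nra. }
    nra.
  - destruct (Rle_dec x y) as [|Hn]; auto. exfalso. apply Rnot_le_lt in Hn.
    assert (Hx : 0 < x) by lra. apply Rnot_le_lt in n.
    set (e := Rmin e0 ((x - y) / (2 * x * c))).
    assert (He : 0 < e) by (unfold e; apply Rmin_pos; auto; apply Rdiv_lt_0_compat; nra).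
    assert (He1 : e <= (x - y) / (2 * x * c)) by apply Rmin_r.
    assert (Hce : c * e <= (x - y) / (2 * x)).
    { apply Rmult_le_compat_l with (r := c) in He1; [|lra].
      replace (c * ((x - y) / (2 * x * c))) with ((x - y) / (2 * x)) in He1 by (field; lra). auto. }
    assert (Hce1 : (x - y) / (2 * x) < 1).
    { apply Rmult_lt_reg_r with (r := 2 * x); [lra|]. unfold Rdiv. rewrite Rmult_assoc, Rinv_l by lra. lra. }
    pose proof (exp_ineq1 (- (c * e))) as Hexp.
    assert (c * e <> 0) by nra. assert (- (c * e) <> 0) by lra. specialize (Hexp H1).
    rewrite exp_Ropp in Hexp.
    assert (Hpos : 0 < exp (c * e)) by apply exp_pos.
    assert (Hb : exp (c * e) * (1 - c * e) < 1).
    { apply Rmult_lt_compat_l with (r := exp (c * e)) in Hexp; auto.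
      rewrite Rinv_r in Hexp by lra. lra. }
    specialize (H e (conj He (Rmin_l _ _))).
    assert (Hxy : y * exp (c * e) * (1 - c * e) <= y) by nra.
    assert (Hq : x * (c * e) <= (x - y) / 2).
    { apply Rmult_le_compat_l with (r := x) in Hce; [|lra].
      replace (x * ((x - y) / (2 * x))) with ((x - y) / 2) in Hce by (field; lra). auto. }
    assert (Hpos2 : 0 < 1 - c * e) by lra.
    assert (x * (1 - c * e) <= y * exp (c * e) * (1 - c * e)) by (apply Rmult_le_compat_r; lra).
    nra.
Qed.

Lemma lim_zero_geom : forall x C c, 0 < c ->
  (forall q : nat, Rabs x <= C * exp (- c * INR q)) -> x = 0.
Proof.
  intros x C c Hc H.
  destruct (Req_dec x 0) as [|Hx]; auto. exfalso.
  assert (Hax : 0 < Rabs x) by (apply Rabs_pos_lt; auto).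
  assert (HC : 0 < C).
  { specialize (H 0%nat). simpl in H. rewrite Rmult_0_r, exp_0 in H. lra. }
  destruct (INR_unbounded (C / (Rabs x * c))) as [q Hq].
  specialize (H q).
  assert (Hq0 : 0 < INR q).
  { eapply Rlt_trans; [|apply Hq]. apply Rdiv_lt_0_compat; nra. }
  pose proof (exp_ineq1 (c * INR q)) as He. assert (c * INR q <> 0) by nra. specialize (He H0).
  rewrite Ropp_mult_distr_l_reverse, exp_Ropp in H.
  assert (Hp : 0 < exp (c * INR q)) by apply exp_pos.
  assert (Rabs x * exp (c * INR q) <= C).
  { apply Rmult_le_compat_r with (r := exp (c * INR q)) in H; [|lra].
    rewrite Rmult_assoc, Rinv_l in H by lra. lra. }
  assert (C < Rabs x * c * INR q).
  { apply Rmult_lt_compat_l with (r := Rabs x * c) in Hq; [|nra].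
    replace (Rabs x * c * (C / (Rabs x * c))) with C in Hq by (field; nra). lra. }
  nra.
Qed.

Lemma deriv_loc : forall f g x l d, 0 < d -> (forall y, Rabs (y - x) < d -> f y = g y) ->
  derivable_pt_lim g x l -> derivable_pt_lim f x l.
Proof.
  intros f g x l d Hd Heq H. apply is_derive_Reals. apply is_derive_Reals in H.
  apply (is_derive_ext_loc g f); auto.
  exists (mkposreal d Hd). intros y Hy. symmetry. apply Heq. apply Hy.
Qed.

Lemma cont_loc : forall f g x d, 0 < d -> (forall y, Rabs (y - x) < d -> f y = g y) ->
  continuity_pt g x -> continuity_pt f x.
Proof.
  intros f g x d Hd Heq H. rewrite cont_eps in *. intros eps Heps.
  destruct (H eps Heps) as [e [He H1]]. exists (Rmin e d). split; [apply Rmin_pos; auto|].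
  intros y Hy. rewrite !Heq; [|rewrite Rminus_diag, Rabs_R0; auto|pose proof (Rmin_r e d); lra].
  apply H1. pose proof (Rmin_l e d); lra.
Qed.

Lemma lim_seq_bound : forall u (l : R) c d b, is_lim_seq u l ->
  (forall n, Rabs (c * u n + d) <= b) -> Rabs (c * l + d) <= b.
Proof.
  intros u l c d b Hl Hb.
  destruct (Rle_dec (Rabs (c * l + d)) b) as [|Hn]; auto. exfalso. apply Rnot_le_lt in Hn.
  apply is_lim_seq_spec in Hl. unfold is_lim_seq' in Hl.
  assert (He : 0 < (Rabs (c * l + d) - b) / (Rabs c + 1)).
  { apply Rdiv_lt_0_compat; [lra|]. pose proof (Rabs_pos c); lra. }
  destruct (Hl (mkposreal _ He)) as [N HN]. specialize (HN N (le_n N)). simpl in HN.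
  specialize (Hb N).
  assert (Rabs (c * l + d - (c * u N + d)) <= Rabs c * Rabs (u N - l)).
  { replace (c * l + d - (c * u N + d)) with (- (c * (u N - l))) by ring.
    rewrite Rabs_Ropp, Rabs_mult. lra. }
  assert (Rabs c * Rabs (u N - l) <= (Rabs c + 1) * Rabs (u N - l)) by (pose proof (Rabs_pos (u N - l)); nra).
  assert ((Rabs c + 1) * Rabs (u N - l) < Rabs (c * l + d) - b).
  { apply Rmult_lt_compat_l with (r := Rabs c + 1) in HN; [|pose proof (Rabs_pos c); lra].
    replace ((Rabs c + 1) * ((Rabs (c * l + d) - b) / (Rabs c + 1))) with (Rabs (c * l + d) - b) in HN
      by (field; pose proof (Rabs_pos c); lra). auto. }
  pose proof (Rabs_triang_inv (c * l + d) (c * u N + d)). lra.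
Qed.

Definition idx (th : Z -> R) (t : R) : Z :=
  epsilon (inhabits 0%Z) (fun k => sk th (k - 1) < t <= sk th k).

Section Idx.
Variables (th : Z -> R) (omega : R) (p : nat).
Hypothesis Hth_inc : forall k, th k < th (k + 1)%Z.
Hypothesis Homega : 0 < omega.
Hypothesis Hper : forall k, th (k + 2 * Z.of_nat p)%Z = th k + omega.

Lemma idx_ex : forall t, exists k, sk th (k - 1) < t <= sk th k.
Proof.
  intros t.
  pose proof (psiw_pos th omega p Hth_inc Homega Hper) as Hps.
  destruct (INR_unbounded (Rabs (t - sk th 0) / psiw th p)) as [q Hq].
  assert (Hq' : Rabs (t - sk th 0) < INR q * psiw th p).
  { apply Rmult_lt_compat_r with (r := psiw th p) in Hq; auto.
    unfold Rdiv in Hq. rewrite Rmult_assoc, Rinv_l in Hq by lra. lra. }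
  pose proof (sk_period_mult th omega p Hper 0 q) as Hup.
  pose proof (sk_period_mult th omega p Hper (- (Z.of_nat p * Z.of_nat q)) q) as Hdn.
  replace (- (Z.of_nat p * Z.of_nat q) + Z.of_nat p * Z.of_nat q)%Z with 0%Z in Hdn by lia.
  assert (HL : sk th (- (Z.of_nat p * Z.of_nat q)) < t) by (pose proof (Rle_abs (sk th 0 - t)); rewrite Rabs_minus_sym in H; lra).
  assert (HU : t <= sk th (0 + Z.of_nat p * Z.of_nat q)) by (pose proof (Rle_abs (t - sk th 0)); lra).
  assert (G : forall N : nat, forall L, sk th L < t -> t <= sk th (L + Z.of_nat N) ->
            exists k, sk th (k - 1) < t <= sk th k).
  { induction N; intros L H1 H2.
    - simpl in H2. rewrite Z.add_0_r in H2. lra.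
    - destruct (Rle_dec t (sk th (L + 1))).
      + exists (L + 1)%Z. replace (L + 1 - 1)%Z with L by lia. auto.
      + apply (IHN (L + 1)%Z); [lra|]. rewrite Nat2Z.inj_succ in H2.
        replace (L + 1 + Z.of_nat N)%Z with (L + Z.succ (Z.of_nat N))%Z by lia. auto. }
  apply (G (Z.to_nat (2 * Z.of_nat p * Z.of_nat q)) _ HL).
  rewrite Z2Nat.id by lia. replace (- (Z.of_nat p * Z.of_nat q) + 2 * Z.of_nat p * Z.of_nat q)%Z
    with (0 + Z.of_nat p * Z.of_nat q)%Z by lia. auto.
Qed.

Lemma idx_spec : forall t, sk th (idx th t - 1) < t <= sk th (idx th t).
Proof.
  intros t. unfold idx. apply epsilon_spec. apply idx_ex.
Qed.

Lemma idx_unique : forall t k, sk th (k - 1) < t <= sk th k -> idx th t = k.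
Proof.
  intros t k Hk. pose proof (idx_spec t) as Hi. set (k' := idx th t) in *.
  destruct (Z_lt_le_dec k' k).
  - pose proof (sk_le th Hth_inc k' (k - 1)). assert (k' <= k - 1)%Z by lia. specialize (H H0). lra.
  - destruct (Z.eq_dec k' k); auto.
    pose proof (sk_le th Hth_inc k (k' - 1)). assert (k <= k' - 1)%Z by lia. specialize (H H0). lra.
Qed.

End Idx.

Fixpoint ps (f : nat -> R) (N : nat) : R :=
  match N with O => 0 | S N' => ps f N' + f N' end.

Lemma sum_n_ps : forall f N, sum_n f N = ps f (S N).
Proof.
  intros f N. induction N.
  - rewrite sum_O. simpl. lra.
  - rewrite sum_Sn, IHN. simpl. reflexivity.
Qed.

Lemma ps_abs : forall f N, Rabs (ps f N) <= ps (fun n => Rabs (f n)) N.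
Proof.
  intros f N; induction N; simpl; [rewrite Rabs_R0; lra|].
  eapply Rle_trans; [apply Rabs_triang|lra].
Qed.

Lemma ps_le : forall f g N, (forall n, f n <= g n) -> ps f N <= ps g N.
Proof. intros f g N H; induction N; simpl; [lra|]. specialize (H N). lra. Qed.

Lemma ps_plus : forall f g N, ps (fun n => f n + g n) N = ps f N + ps g N.
Proof. intros f g N; induction N; simpl; lra. Qed.

Lemma ps_scal : forall c f N, ps (fun n => c * f n) N = c * ps f N.
Proof. intros c f N; induction N; simpl; [ring|rewrite IHN; ring]. Qed.

Lemma ps_ext : forall f g N, (forall n, f n = g n) -> ps f N = ps g N.
Proof. intros f g N H; induction N; simpl; [lra|rewrite IHN, H; lra]. Qed.

Lemma ps_tele : forall E N, ps (fun n => E n - E (S n)) N = E O - E N.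
Proof. intros E N; induction N; simpl; lra. Qed.

Lemma ps_split : forall f P N, ps f (P + N) = ps f P + ps (fun n => f (P + n)%nat) N.
Proof.
  intros f P N. induction N; simpl.
  - rewrite Nat.add_0_r. lra.
  - rewrite Nat.add_succ_r. simpl. rewrite IHN. lra.
Qed.

Lemma ps_le_N : forall f N, (forall n, f n <= 1) -> ps f N <= INR N.
Proof.
  intros f N H; induction N; [simpl; lra|]. rewrite S_INR. cbn [ps]. specialize (H N). lra.
Qed.

Lemma ps_geom_bound : forall (E : nat -> R) P rho, (1 <= P)%nat ->
  (forall n, 0 <= E n <= 1) -> (forall n, E (P + n)%nat = rho * E n) -> 0 <= rho < 1 ->
  forall N, ps E N <= INR P / (1 - rho).
Proof.
  intros E P rho HP HE Hper Hrho.
  assert (Hq : INR P <= INR P / (1 - rho)).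
  { apply Rmult_le_reg_r with (r := 1 - rho); [lra|]. unfold Rdiv. rewrite Rmult_assoc, Rinv_l by lra.
    pose proof (pos_INR P). nra. }
  intros N. induction N as [N IH] using lt_wf_ind.
  destruct (le_lt_dec N P).
  - eapply Rle_trans; [apply ps_le_N; intros; apply HE|]. eapply Rle_trans; [|apply Hq].
    apply le_INR; auto.
  - replace N with (P + (N - P))%nat by lia. rewrite ps_split.
    rewrite (ps_ext (fun n => E (P + n)%nat) (fun n => rho * E n)) by (intros; apply Hper). rewrite ps_scal.
    assert (ps E P <= INR P) by (apply ps_le_N; intros; apply HE).
    specialize (IH (N - P)%nat ltac:(lia)).
    assert (rho * ps E (N - P) <= rho * (INR P / (1 - rho))) by (apply Rmult_le_compat_l; lra).
    replace (INR P / (1 - rho)) with (INR P + rho * (INR P / (1 - rho))) by (field; lra). lra.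
Qed.

Lemma ps_nonneg_ex_series : forall b M, (forall n, 0 <= b n) -> (forall N, ps b N <= M) -> ex_series b.
Proof.
  intros b M Hb HM.
  destruct (ex_finite_lim_seq_incr (sum_n b) M) as [l Hl].
  - intros n. rewrite !sum_n_ps. simpl. specialize (Hb (S n)). lra.
  - intros n. rewrite sum_n_ps. apply HM.
  - exists l. exact Hl.
Qed.

Lemma cont_of_pt : forall f x, continuity_pt f x -> continuous f x.
Proof. intros. apply continuity_pt_filterlim. auto. Qed.

Lemma minusR : forall u v : R, minus u v = u - v.
Proof. reflexivity. Qed.

Lemma exR : forall f u v, (forall z, continuity_pt f z) -> ex_RInt f u v.
Proof. intros. apply (@ex_RInt_continuous R_CompleteNormedModule). intros. apply continuity_pt_filterlim. auto. Qed.

Lemma exp_lin_deriv : forall c d x, derivable_pt_lim (fun t => exp (c * t + d)) x (c * exp (c * x + d)).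
Proof.
  intros. apply is_derive_Reals. auto_derive; auto. ring.
Qed.

Lemma int_exp_bound : forall (h : R -> R) x y t M lam, x <= y -> 0 < lam ->
  (forall z, continuity_pt h z) ->
  (forall z, x < z < y -> Rabs (h z) <= M * exp (- lam * (t - z))) ->
  Rabs (RInt h x y) <= M / lam * (exp (- lam * (t - y)) - exp (- lam * (t - x))).
Proof.
  intros h x y t M lam Hxy Hlam Hc Hb.
  assert (Hex : forall u v, ex_RInt h u v) by (intros; apply exR; auto).
  eapply Rle_trans; [apply abs_RInt_le; auto|].
  assert (Hcm : forall z, continuity_pt (fun z => M * exp (- lam * (t - z))) z).
  { intros z. apply derivable_continuous_pt. exists (M * (lam * exp (- lam * (t - z)))).
    apply is_derive_Reals. auto_derive; auto. unfold Rminus; ring. }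
  eapply Rle_trans.
  - apply (RInt_le _ (fun z => M * exp (- lam * (t - z)))).
    + auto.
    + apply exR. intros. apply (continuity_pt_comp h Rabs); [apply Hc|apply Rcontinuity_abs].
    + apply exR. auto.
    + intros z Hz. apply Hb. auto.
  - right. apply is_RInt_unique.
    replace (M / lam * (exp (- lam * (t - y)) - exp (- lam * (t - x)))) with
      (M / lam * exp (- lam * (t - y)) - M / lam * exp (- lam * (t - x))) by ring.
    apply (is_RInt_derive (fun z => M / lam * exp (- lam * (t - z)))).
    + intros z _. auto_derive; auto. unfold Rminus. field. lra.
    + intros z _. apply cont_of_pt. auto.
Qed.

Definition Jr (th : Z -> R) (a : R) (g : Z -> R -> R) (k : Z) (t : R) : R :=
  RInt (fun z => exp (a * z) * g k z) (sk th (k - 1)) t.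
Definition J th a g k t : R := exp (- a * t) * Jr th a g k t.
Definition Pp (th : Z -> R) (a : R) (l k : Z) : R :=
  prodZ (fun nu => 1 - delta th nu * a) l (Z.to_nat (k - l + 1)).
Definition cc th a g (j : Z) : R :=
  (1 - delta th j * a) * J th a g j (sk th j) + delta th j * g j (sk th j).
Definition term th a g (k : Z) (n : nat) : R :=
  exp (- a * (sk th (k - 1) - sk th (k - 1 - Z.of_nat n))) * Pp th a (k - Z.of_nat n) (k - 1)
  * cc th a g (k - 1 - Z.of_nat n).
Definition wS th a g (k : Z) : R := Series (term th a g k).
Definition Yl th a g (k : Z) (t : R) : R :=
  exp (- a * (t - sk th (k - 1))) * wS th a g k + J th a g k t.

Lemma RInt_correctR : forall (f : R -> R) x y, ex_RInt f x y -> is_RInt f x y (RInt f x y).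
Proof. intros. apply (@RInt_correct R_CompleteNormedModule). auto. Qed.

Lemma Pp_empty : forall th a k, Pp th a (k + 1) k = 1.
Proof. intros. unfold Pp. replace (k - (k + 1) + 1)%Z with 0%Z by lia. reflexivity. Qed.

Lemma Pp_first : forall th a j k, (j <= k)%Z -> Pp th a j k = (1 - delta th j * a) * Pp th a (j + 1) k.
Proof.
  intros. unfold Pp. replace (Z.to_nat (k - j + 1)) with (S (Z.to_nat (k - (j + 1) + 1))).
  - apply prodZ_S'.
  - rewrite <- Z2Nat.inj_succ by lia. f_equal. lia.
Qed.

Lemma Pp_last : forall th a j k, (j <= k)%Z -> Pp th a j k = Pp th a j (k - 1) * (1 - delta th k * a).
Proof.
  intros. unfold Pp. replace (Z.to_nat (k - j + 1)) with (S (Z.to_nat (k - 1 - j + 1))).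
  - rewrite prodZ_S. rewrite Z2Nat.id by lia. replace (j + (k - 1 - j + 1))%Z with k by lia. reflexivity.
  - rewrite <- Z2Nat.inj_succ by lia. f_equal. lia.
Qed.

Lemma exp_split : forall a x y z, exp (- a * (x - y)) * exp (- a * (y - z)) = exp (- a * (x - z)).
Proof. intros. rewrite <- exp_plus. f_equal. ring. Qed.


Lemma ode_const : forall (d : R -> R) x0 x1 a, x0 < x1 ->
  (forall t, x0 < t < x1 -> derivable_pt_lim d t (- a * d t)) ->
  exists c, forall t, x0 < t < x1 -> d t = c * exp (- a * t).
Proof.
  intros d x0 x1 a Hx Hd.
  set (h := fun t => exp (a * t) * d t).
  assert (Hh : forall t, x0 < t < x1 -> derivable_pt_lim h t 0).
  { intros t Ht. unfold h.
    assert (H1 : derivable_pt_lim (fun t => exp (a * t)) t (a * exp (a * t))).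
    { apply is_derive_Reals. auto_derive; auto. ring. }
    pose proof (derivable_pt_lim_mult _ _ _ _ _ H1 (Hd t Ht)) as H. unfold mult_fct in H.
    replace 0 with (a * exp (a * t) * d t + exp (a * t) * (- a * d t)) by ring. exact H. }
  set (m := (x0 + x1) / 2).
  exists (h m). intros t Ht.
  assert (Hm : x0 < m < x1) by (unfold m; lra).
  set (lo := Rmin t m). set (hi := Rmax t m).
  assert (Hlo : x0 < lo) by (unfold lo, Rmin; destruct (Rle_dec t m); lra).
  assert (Hhi : hi < x1) by (unfold hi, Rmax; destruct (Rle_dec t m); lra).
  assert (Hlh : lo <= hi) by (unfold lo, hi, Rmin, Rmax; destruct (Rle_dec t m); lra).
  assert (pr : forall x, lo < x < hi -> derivable_pt h x).
  { intros x Hxx. exists 0. apply Hh. lra. }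
  assert (Hc : forall x, lo <= x <= hi -> continuity_pt h x).
  { intros x Hxx. apply derivable_continuous_pt. exists 0. apply Hh. lra. }
  pose proof (null_derivative_loc h lo hi pr Hc) as Hn.
  assert (Hn' : constant_D_eq h (fun x => lo <= x <= hi) (h lo)).
  { apply Hn. intros x P. apply derive_pt_eq_0. apply Hh. lra. }
  assert (E1 : h t = h lo) by (apply Hn'; unfold lo, hi, Rmin, Rmax; destruct (Rle_dec t m); lra).
  assert (E2 : h m = h lo) by (apply Hn'; unfold lo, hi, Rmin, Rmax; destruct (Rle_dec t m); lra).
  rewrite E2, <- E1. unfold h.
  replace (exp (a * t) * d t * exp (- a * t)) with (d t * (exp (a * t) * exp (- a * t))) by ring.
  rewrite <- exp_plus. replace (a * t + - a * t) with 0 by ring. rewrite exp_0. ring.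
Qed.

Lemma exp_mono : forall x y, x <= y -> exp x <= exp y.
Proof. intros. destruct (Req_dec x y); [subst; lra|]. left. apply exp_increasing. lra. Qed.

Lemma small_zero : forall z, (forall e, 0 < e -> Rabs z < 2 * e) -> z = 0.
Proof.
  intros z H. destruct (Req_dec z 0); auto. exfalso.
  assert (0 < Rabs z) by (apply Rabs_pos_lt; auto). specialize (H (Rabs z / 2) ltac:(lra)). lra.
Qed.

Lemma left_lim_unique : forall f F x d, 0 < d -> left_cont f x -> continuity_pt F x ->
  (forall y, x - d < y < x -> f y = F y) -> f x = F x.
Proof.
  intros f F x d Hd Hl Hc Heq.
  assert (f x - F x = 0); [|lra]. apply small_zero. intros e He.
  destruct (Hl e He) as [d1 [Hd1 H1]]. rewrite cont_eps in Hc. destruct (Hc e He) as [d2 [Hd2 H2]].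
  set (m := Rmin d (Rmin d1 d2)).
  assert (Hm : 0 < m) by (unfold m; repeat apply Rmin_pos; auto).
  assert (m <= d /\ m <= d1 /\ m <= d2).
  { unfold m. pose proof (Rmin_l d (Rmin d1 d2)). pose proof (Rmin_r d (Rmin d1 d2)).
    pose proof (Rmin_l d1 d2). pose proof (Rmin_r d1 d2). lra. }
  set (y := x - m / 2).
  specialize (H1 y ltac:(unfold y; lra)). specialize (H2 y ltac:(unfold y; rewrite Rabs_left; lra)).
  rewrite Heq in H1 by (unfold y; lra).
  replace (f x - F x) with (- (F y - f x) + (F y - F x)) by ring.
  eapply Rle_lt_trans; [apply Rabs_triang|]. rewrite Rabs_Ropp. lra.
Qed.

Lemma right_lim_unique : forall f F x L d, 0 < d -> right_lim f x L -> continuity_pt F x ->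
  (forall y, x < y < x + d -> f y = F y) -> L = F x.
Proof.
  intros f F x L d Hd Hl Hc Heq.
  assert (L - F x = 0); [|lra]. apply small_zero. intros e He.
  destruct (Hl e He) as [d1 [Hd1 H1]]. rewrite cont_eps in Hc. destruct (Hc e He) as [d2 [Hd2 H2]].
  set (m := Rmin d (Rmin d1 d2)).
  assert (Hm : 0 < m) by (unfold m; repeat apply Rmin_pos; auto).
  assert (m <= d /\ m <= d1 /\ m <= d2).
  { unfold m. pose proof (Rmin_l d (Rmin d1 d2)). pose proof (Rmin_r d (Rmin d1 d2)).
    pose proof (Rmin_l d1 d2). pose proof (Rmin_r d1 d2). lra. }
  set (y := x + m / 2).
  specialize (H1 y ltac:(unfold y; lra)). specialize (H2 y ltac:(unfold y; rewrite Rabs_right; lra)).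
  rewrite Heq in H1 by (unfold y; lra).
  replace (L - F x) with (- (F y - L) + (F y - F x)) by ring.
  eapply Rle_lt_trans; [apply Rabs_triang|]. rewrite Rabs_Ropp. lra.
Qed.

Section Lin.
Variables (th : Z -> R) (omega : R) (p : nat).
Hypothesis Hth_inc : forall k, th k < th (k + 1)%Z.
Hypothesis Homega : 0 < omega.
Hypothesis Hper : forall k, th (k + 2 * Z.of_nat p)%Z = th k + omega.
Variables (a Kc lam : R).
Hypothesis Ha : 0 < a.
Hypothesis HKc : 0 < Kc.
Hypothesis Hlam : 0 < lam.
Hypothesis HKb : forall s tau v, tau <= s -> u_val th a s tau v -> Rabs v <= Kc * exp (- lam * (s - tau)).
Variable g : Z -> R -> R.
Hypothesis Hg : forall k t, continuity_pt (g k) t.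
Variable G : R.
Hypothesis HG : forall k t, Rabs (g k t) <= G.

Notation s := (sk th).

Lemma G_nonneg : 0 <= G.
Proof. eapply Rle_trans; [apply Rabs_pos|apply (HG 0%Z 0)]. Qed.

Lemma integrand_cont : forall k z, continuity_pt (fun z => exp (a * z) * g k z) z.
Proof.
  intros. apply continuity_pt_mult; [|apply Hg].
  apply derivable_continuous_pt. exists (a * exp (a * z)). apply is_derive_Reals. auto_derive; auto. ring.
Qed.

Lemma Jr_deriv : forall k t, derivable_pt_lim (Jr th a g k) t (exp (a * t) * g k t).
Proof.
  intros. apply is_derive_Reals. unfold Jr.
  apply (is_derive_RInt (fun z => exp (a * z) * g k z) (fun b => RInt (fun z => exp (a * z) * g k z) (s (k - 1)) b) (s (k - 1)) t).
  - exists (mkposreal 1 Rlt_0_1). intros. apply RInt_correctR. apply exR. apply integrand_cont.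
  - apply cont_of_pt. apply integrand_cont.
Qed.

Lemma J_deriv : forall k t, derivable_pt_lim (J th a g k) t (- a * J th a g k t + g k t).
Proof.
  intros. unfold J.
  assert (H1 : derivable_pt_lim (fun t => exp (- a * t)) t (- a * exp (- a * t))).
  { apply is_derive_Reals. auto_derive; auto. ring. }
  pose proof (derivable_pt_lim_mult _ _ _ _ _ H1 (Jr_deriv k t)) as H.
  unfold mult_fct in H. replace (- a * (exp (- a * t) * Jr th a g k t) + g k t) with
    (- a * exp (- a * t) * Jr th a g k t + exp (- a * t) * (exp (a * t) * g k t)).
  - exact H.
  - rewrite <- Rmult_assoc, <- exp_plus. replace (- a * t + a * t) with 0 by ring. rewrite exp_0. ring.
Qed.

Lemma Y_deriv : forall k t, derivable_pt_lim (Yl th a g k) t (- a * Yl th a g k t + g k t).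
Proof.
  intros. unfold Yl.
  assert (H1 : derivable_pt_lim (fun t => exp (- a * (t - s (k - 1))) * wS th a g k) t
                 (- a * exp (- a * (t - s (k - 1))) * wS th a g k)).
  { apply is_derive_Reals. auto_derive; auto. unfold Rminus; ring. }
  pose proof (derivable_pt_lim_plus _ _ _ _ _ H1 (J_deriv k t)) as H.
  unfold plus_fct in H. replace (- a * (exp (- a * (t - s (k - 1))) * wS th a g k + J th a g k t) + g k t)
    with (- a * exp (- a * (t - s (k - 1))) * wS th a g k + (- a * J th a g k t + g k t)) by ring.
  exact H.
Qed.

Lemma Y_cont : forall k t, continuity_pt (Yl th a g k) t.
Proof.
  intros. apply derivable_continuous_pt. exists (- a * Yl th a g k t + g k t). apply Y_deriv.
Qed.

Lemma J_left : forall k, J th a g k (s (k - 1)) = 0.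
Proof. intros. unfold J, Jr. rewrite RInt_point. unfold zero; simpl. ring. Qed.

Lemma Y_left : forall k, Yl th a g k (s (k - 1)) = wS th a g k.
Proof. intros. unfold Yl. rewrite J_left. rewrite Rminus_diag, Rmult_0_r, exp_0. ring. Qed.

Lemma J_as_int : forall k t c, c * J th a g k t = RInt (fun z => c * exp (- a * (t - z)) * g k z) (s (k - 1)) t.
Proof.
  intros. unfold J, Jr.
  rewrite <- Rmult_assoc.
  change ((c * exp (- a * t)) * RInt (fun z => exp (a * z) * g k z) (s (k - 1)) t) with
    (scal (c * exp (- a * t)) (RInt (fun z => exp (a * z) * g k z) (s (k - 1)) t)).
  rewrite <- RInt_scal by (apply exR; apply integrand_cont).
  apply RInt_ext. intros. change (scal (c * exp (- a * t)) (exp (a * x) * g k x)) with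
    ((c * exp (- a * t)) * (exp (a * x) * g k x)).
  replace (exp (- a * (t - x))) with (exp (- a * t) * exp (a * x)) by (rewrite <- exp_plus; f_equal; ring).
  match goal with |- ?x = ?y => change (@eq R x y) end. ring.
Qed.

Lemma J_bound : forall k t, s (k - 1) < t <= s k ->
  Rabs (J th a g k t) <= Kc * G / lam * (1 - exp (- lam * (t - s (k - 1)))).
Proof.
  intros k t Ht.
  replace (J th a g k t) with (1 * J th a g k t) by ring. rewrite J_as_int.
  replace (1 - exp (- lam * (t - s (k - 1)))) with (exp (- lam * (t - t)) - exp (- lam * (t - s (k - 1))))
    by (rewrite Rminus_diag, Rmult_0_r, exp_0; auto).
  apply int_exp_bound; [lra|auto| |].
  - intros z. apply continuity_pt_mult; [|apply Hg]. apply derivable_continuous_pt.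
    exists (1 * (a * exp (- a * (t - z)))). apply is_derive_Reals. auto_derive; auto. unfold Rminus; ring.
  - intros z Hz. rewrite Rabs_mult, Rmult_1_l.
    assert (Hv : Rabs (exp (- a * (t - z))) <= Kc * exp (- lam * (t - z))).
    { apply HKb; [lra|]. right. exists (k - 1)%Z. replace (k - 1 + 1)%Z with k by lia. repeat split; lra. }
    specialize (HG k z). pose proof (Rabs_pos (g k z)). pose proof (Rabs_pos (exp (- a * (t - z)))).
    pose proof (exp_pos (- lam * (t - z))).
    replace (Kc * G * exp (- lam * (t - z))) with ((Kc * exp (- lam * (t - z))) * G) by ring.
    apply Rmult_le_compat; auto.
Qed.

Lemma A_bound : forall k j t, (j <= k - 1)%Z -> s (k - 1) < t <= s k ->
  Rabs (Pp th a j (k - 1) * (exp (- a * (t - s j)) * J th a g j (s j))) <=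
  Kc * G / lam * (exp (- lam * (t - s j)) - exp (- lam * (t - s (j - 1)))).
Proof.
  intros k j t Hj Ht.
  assert (Hsj : s j <= s (k - 1)) by (apply sk_le; auto).
  replace (Pp th a j (k - 1) * (exp (- a * (t - s j)) * J th a g j (s j))) with
    ((Pp th a j (k - 1) * exp (- a * (t - s j))) * J th a g j (s j)) by ring.
  rewrite J_as_int.
  apply int_exp_bound.
  - apply sk_le; auto; lia.
  - auto.
  - intros z. apply continuity_pt_mult; [|apply Hg]. apply derivable_continuous_pt.
    exists (Pp th a j (k - 1) * exp (- a * (t - s j)) * (a * exp (- a * (s j - z)))).
    apply is_derive_Reals. auto_derive; auto. unfold Rminus; ring.
  - intros z Hz.
    replace (Pp th a j (k - 1) * exp (- a * (t - s j)) * exp (- a * (s j - z)) * g j z) with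
      ((exp (- a * (t - z)) * Pp th a j (k - 1)) * g j z)
      by (rewrite <- (exp_split a t (s j) z); ring).
    rewrite Rabs_mult.
    assert (Hv : Rabs (exp (- a * (t - z)) * Pp th a j (k - 1)) <= Kc * exp (- lam * (t - z))).
    { apply HKb; [lra|]. left. exists (k - 1)%Z, j. replace (k - 1 + 1)%Z with k by lia.
      repeat split; try lra; try lia. }
    specialize (HG j z). pose proof (Rabs_pos (g j z)).
    pose proof (Rabs_pos (exp (- a * (t - z)) * Pp th a j (k - 1))).
    replace (Kc * G * exp (- lam * (t - z))) with ((Kc * exp (- lam * (t - z))) * G) by ring.
    apply Rmult_le_compat; auto.
Qed.

Lemma B_bound : forall k j t, (j <= k - 1)%Z -> s (k - 1) < t <= s k ->
  Rabs (exp (- a * (t - s j)) * Pp th a (j + 1) (k - 1)) <= Kc * exp (- lam * (t - s j)).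
Proof.
  intros k j t Hj Ht.
  assert (Hsj : s j <= s (k - 1)) by (apply sk_le; auto).
  assert (He1 : 0 < eta th (j + 1)) by (apply eta_pos; auto).
  pose proof (sk_succ th j) as Hs1.
  apply (lim_eps _ _ (lam - a) (Rmin (eta th (j + 1)) (t - s j))).
  - pose proof (exp_pos (- lam * (t - s j))). nra.
  - apply Rmin_pos; lra.
  - intros e [He He0].
    assert (He1' : e <= eta th (j + 1)) by (pose proof (Rmin_l (eta th (j + 1)) (t - s j)); lra).
    assert (He2' : e <= t - s j) by (pose proof (Rmin_r (eta th (j + 1)) (t - s j)); lra).
    assert (Hv : Rabs (exp (- a * (t - (s j + e))) * Pp th a (j + 1) (k - 1)) <= Kc * exp (- lam * (t - (s j + e)))).
    { apply HKb; [lra|].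
      destruct (Z.eq_dec j (k - 1)) as [Ej|Ej].
      - subst j. replace (k - 1 + 1)%Z with k in * by lia. replace (Pp th a k (k - 1)) with 1 by (rewrite <- (Pp_empty th a (k - 1)) at 1; f_equal; lia).
        right. exists (k - 1)%Z. replace (k - 1 + 1)%Z with k by lia. repeat split; try lra.
      - left. exists (k - 1)%Z, (j + 1)%Z. replace (j + 1 - 1)%Z with j by lia. replace (k - 1 + 1)%Z with k by lia.
        repeat split; try lra; try lia. }
    replace (exp (- a * (t - (s j + e)))) with (exp (- a * (t - s j)) * exp (a * e)) in Hv
      by (rewrite <- exp_plus; f_equal; ring).
    replace (exp (- lam * (t - (s j + e)))) with (exp (- lam * (t - s j)) * exp (lam * e)) in Hv
      by (rewrite <- exp_plus; f_equal; ring).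
    assert (Hv2 : Rabs (exp (- a * (t - s j)) * Pp th a (j + 1) (k - 1)) * exp (a * e) <=
                  Kc * (exp (- lam * (t - s j)) * exp (lam * e))).
    { replace (exp (- a * (t - s j)) * exp (a * e) * Pp th a (j + 1) (k - 1)) with
        ((exp (- a * (t - s j)) * Pp th a (j + 1) (k - 1)) * exp (a * e)) in Hv by ring.
      rewrite Rabs_mult, (Rabs_right (exp (a * e))) in Hv by (left; apply exp_pos). exact Hv. }
    replace (exp ((lam - a) * e)) with (exp (lam * e) * / exp (a * e))
      by (rewrite <- exp_Ropp, <- exp_plus; f_equal; ring).
    pose proof (exp_pos (a * e)).
    apply Rmult_le_reg_r with (r := exp (a * e)); auto.
    replace (Kc * exp (- lam * (t - s j)) * (exp (lam * e) * / exp (a * e)) * exp (a * e)) with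
      (Kc * (exp (- lam * (t - s j)) * exp (lam * e))) by (field; lra).
    exact Hv2.
Qed.


Lemma exp_le_1 : forall x, x <= 0 -> exp x <= 1.
Proof.
  intros. rewrite <- exp_0. destruct (Req_dec x 0); [subst; lra|]. left. apply exp_increasing. lra.
Qed.

Lemma rho_bounds : 0 <= exp (- lam * psiw th p) < 1.
Proof.
  pose proof (psiw_pos th omega p Hth_inc Homega Hper). split; [left; apply exp_pos|].
  rewrite <- exp_0. apply exp_increasing. nra.
Qed.

Lemma term_ident : forall k n t,
  exp (- a * (t - s (k - 1))) * term th a g k n =
  Pp th a (k - 1 - Z.of_nat n) (k - 1) * (exp (- a * (t - s (k - 1 - Z.of_nat n))) * J th a g (k - 1 - Z.of_nat n) (s (k - 1 - Z.of_nat n)))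
  + exp (- a * (t - s (k - 1 - Z.of_nat n))) * Pp th a (k - 1 - Z.of_nat n + 1) (k - 1) *
    (delta th (k - 1 - Z.of_nat n) * g (k - 1 - Z.of_nat n) (s (k - 1 - Z.of_nat n))).
Proof.
  intros. unfold term, cc.
  replace (k - Z.of_nat n)%Z with (k - 1 - Z.of_nat n + 1)%Z by lia.
  rewrite (Pp_first th a (k - 1 - Z.of_nat n) (k - 1)) by lia.
  rewrite <- (exp_split a t (s (k - 1)) (s (k - 1 - Z.of_nat n))). ring.
Qed.

Lemma Esum : forall t k N, s (k - 1) <= t ->
  ps (fun n => exp (- lam * (t - s (k - 1 - Z.of_nat n)))) N <= INR p / (1 - exp (- lam * psiw th p)).
Proof.
  intros t k N Ht. apply ps_geom_bound.
  - apply (p_pos th omega p Homega Hper).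
  - intros n. split; [left; apply exp_pos|]. apply exp_le_1.
    assert (s (k - 1 - Z.of_nat n) <= s (k - 1)) by (apply sk_le; auto; lia). nra.
  - intros n. rewrite <- exp_plus. f_equal.
    pose proof (sk_period th omega p Hper (k - 1 - Z.of_nat (p + n))).
    replace (k - 1 - Z.of_nat (p + n) + Z.of_nat p)%Z with (k - 1 - Z.of_nat n)%Z in H by lia.
    rewrite H. ring.
  - apply rho_bounds.
Qed.

Lemma term_bound : forall k n, Rabs (term th a g k n) <=
  exp (a * (s k - s (k - 1))) * (Kc * G / lam + deltamax th p * G * Kc) * exp (- lam * (s (k - 1) - s (k - 1 - Z.of_nat n))).
Proof.
  intros k n.
  assert (Hk : s (k - 1) < s k) by (apply sk_lt; auto; lia).
  pose proof (term_ident k n (s k)) as Hid.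
  set (j := (k - 1 - Z.of_nat n)%Z) in *.
  assert (Hj : (j <= k - 1)%Z) by (unfold j; lia).
  assert (Ht : s (k - 1) < s k <= s k) by lra.
  pose proof (A_bound k j (s k) Hj Ht) as HA.
  pose proof (B_bound k j (s k) Hj Ht) as HB.
  assert (HE : exp (- lam * (s k - s j)) <= exp (- lam * (s (k - 1) - s j))).
  { destruct (Req_dec (s k) (s (k - 1))); [lra|]. left. apply exp_increasing. nra. }
  assert (term th a g k n = exp (a * (s k - s (k - 1))) * (exp (- a * (s k - s (k - 1))) * term th a g k n)).
  { rewrite <- Rmult_assoc, <- exp_plus. replace (a * (s k - s (k - 1)) + - a * (s k - s (k - 1))) with 0 by ring.
    rewrite exp_0. ring. }
  rewrite H, Hid, Rabs_mult, (Rabs_right (exp _)) by (left; apply exp_pos).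
  rewrite (Rmult_assoc (exp (a * (s k - s (k - 1))))). apply Rmult_le_compat_l; [left; apply exp_pos|].
  eapply Rle_trans; [apply Rabs_triang|].
  pose proof (exp_pos (- lam * (s k - s (j - 1)))).
  pose proof (exp_pos (- lam * (s k - s j))).
  assert (HdG : Rabs (delta th j * g j (s j)) <= deltamax th p * G).
  { rewrite Rabs_mult, Rabs_right by (left; apply delta_pos; auto).
    apply Rmult_le_compat; [left; apply delta_pos; auto|apply Rabs_pos|apply delta_le_max with omega; auto|apply HG]. }
  rewrite (Rabs_mult (exp (- a * (s k - s j)) * Pp th a (j + 1) (k - 1))).
  assert (HB' : Rabs (exp (- a * (s k - s j)) * Pp th a (j + 1) (k - 1)) * Rabs (delta th j * g j (s j)) <=
                Kc * exp (- lam * (s k - s j)) * (deltamax th p * G)).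
  { apply Rmult_le_compat; auto; apply Rabs_pos. }
  pose proof G_nonneg. pose proof (deltamax_pos th omega p Hth_inc Homega Hper).
  assert (0 <= Kc * G / lam) by (apply Rmult_le_pos; [nra|left; apply Rinv_0_lt_compat; auto]).
  assert (Kc * G / lam * (exp (- lam * (s k - s j)) - exp (- lam * (s k - s (j - 1)))) <= Kc * G / lam * exp (- lam * (s (k - 1) - s j))).
  { apply Rmult_le_compat_l; auto. lra. }
  assert (Kc * exp (- lam * (s k - s j)) * (deltamax th p * G) <= deltamax th p * G * Kc * exp (- lam * (s (k - 1) - s j))).
  { replace (deltamax th p * G * Kc * exp (- lam * (s (k - 1) - s j))) with (Kc * exp (- lam * (s (k - 1) - s j)) * (deltamax th p * G)) by ring.
    apply Rmult_le_compat_r; [nra|]. apply Rmult_le_compat_l; lra. }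
  nra.
Qed.

Lemma ex_term : forall k, ex_series (term th a g k).
Proof.
  intros k.
  set (Mt := exp (a * (s k - s (k - 1))) * (Kc * G / lam + deltamax th p * G * Kc)).
  apply (@ex_series_le R_AbsRing R_CompleteNormedModule _ (fun n => Mt * exp (- lam * (s (k - 1) - s (k - 1 - Z.of_nat n))))).
  - intros n. apply term_bound.
  - assert (HMt : 0 <= Mt).
    { unfold Mt. pose proof G_nonneg. pose proof (deltamax_pos th omega p Hth_inc Homega Hper).
      apply Rmult_le_pos; [left; apply exp_pos|].
      assert (0 <= Kc * G / lam) by (apply Rmult_le_pos; [nra|left; apply Rinv_0_lt_compat; auto]).
      assert (0 <= deltamax th p * G * Kc) by (apply Rmult_le_pos; [apply Rmult_le_pos; lra|lra]). lra. }
    apply (ps_nonneg_ex_series _ (Mt * (INR p / (1 - exp (- lam * psiw th p))))).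
    + intros. apply Rmult_le_pos; auto. left; apply exp_pos.
    + intros N. rewrite ps_scal. apply Rmult_le_compat_l; auto. apply Esum. lra.
Qed.

Definition coefB := Kc / lam + INR p * deltamax th p * Kc / (1 - exp (- lam * psiw th p)).

Lemma Y_bound : forall k t, s (k - 1) < t <= s k -> Rabs (Yl th a g k t) <= coefB * G.
Proof.
  intros k t Ht. unfold Yl.
  pose proof (Series_correct _ (ex_term k)) as Hs.
  apply (lim_seq_bound (sum_n (term th a g k))); [exact Hs|].
  intros N. rewrite sum_n_ps, <- ps_scal.

  set (E := fun n : nat => exp (- lam * (t - s (k - 1 - Z.of_nat n)))).
  assert (HA : forall n, Rabs (Pp th a (k - 1 - Z.of_nat n) (k - 1) * (exp (- a * (t - s (k - 1 - Z.of_nat n))) * J th a g (k - 1 - Z.of_nat n) (s (k - 1 - Z.of_nat n))))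
       <= Kc * G / lam * (E n - E (S n))).
  { intros n. unfold E. rewrite Nat2Z.inj_succ. replace (k - 1 - Z.succ (Z.of_nat n))%Z with (k - 1 - Z.of_nat n - 1)%Z by lia.
    apply A_bound; auto; lia. }
  assert (HB : forall n, Rabs (exp (- a * (t - s (k - 1 - Z.of_nat n))) * Pp th a (k - 1 - Z.of_nat n + 1) (k - 1) *
       (delta th (k - 1 - Z.of_nat n) * g (k - 1 - Z.of_nat n) (s (k - 1 - Z.of_nat n)))) <= deltamax th p * G * Kc * E n).
  { intros n. rewrite Rabs_mult. unfold E.
    pose proof (B_bound k (k - 1 - Z.of_nat n) t ltac:(lia) Ht).
    assert (Rabs (delta th (k - 1 - Z.of_nat n) * g (k - 1 - Z.of_nat n) (s (k - 1 - Z.of_nat n))) <= deltamax th p * G).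
    { rewrite Rabs_mult, Rabs_right by (left; apply delta_pos; auto).
      apply Rmult_le_compat; [left; apply delta_pos; auto|apply Rabs_pos|apply delta_le_max with omega; auto|apply HG]. }
    replace (deltamax th p * G * Kc * exp (- lam * (t - s (k - 1 - Z.of_nat n)))) with
      (Kc * exp (- lam * (t - s (k - 1 - Z.of_nat n))) * (deltamax th p * G)) by ring.
    apply Rmult_le_compat; auto; apply Rabs_pos. }
  pose proof (J_bound k t Ht) as HJ.
  rewrite (ps_ext _ _ (S N) (fun n => term_ident k n t)).
  rewrite ps_plus.
  eapply Rle_trans; [apply Rabs_triang|].
  eapply Rle_trans; [apply Rplus_le_compat_r; apply Rabs_triang|].
  eapply Rle_trans; [apply Rplus_le_compat_r; apply Rplus_le_compat; apply ps_abs|].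
  eapply Rle_trans; [apply Rplus_le_compat_r; apply Rplus_le_compat; apply ps_le; [exact HA|exact HB]|].
  rewrite ps_scal, ps_tele.
  rewrite ps_scal.
  pose proof (Esum t k (S N) ltac:(lra)) as HEs. fold E in HEs.
  pose proof G_nonneg. pose proof (deltamax_pos th omega p Hth_inc Homega Hper).
  pose proof rho_bounds.
  assert (HE0 : E O = exp (- lam * (t - s (k - 1)))) by (unfold E; simpl; rewrite Z.sub_0_r; auto).
  rewrite HE0. unfold E at 1.
  pose proof (exp_pos (- lam * (t - s (k - 1 - Z.of_nat (S N))))).
  assert (0 <= Kc * G / lam) by (apply Rmult_le_pos; [nra|left; apply Rinv_0_lt_compat; auto]).
  assert (0 <= deltamax th p * G * Kc) by (apply Rmult_le_pos; [nra|lra]).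
  assert (deltamax th p * G * Kc * ps E (S N) <= deltamax th p * G * Kc * (INR p / (1 - exp (- lam * psiw th p)))) by
    (apply Rmult_le_compat_l; auto).
  assert (Kc * G / lam * (exp (- lam * (t - s (k - 1))) - exp (- lam * (t - s (k - 1 - Z.of_nat (S N))))) +
          Kc * G / lam * (1 - exp (- lam * (t - s (k - 1)))) <= Kc * G / lam).
  { assert (Kc * G / lam * exp (- lam * (t - s (k - 1 - Z.of_nat (S N)))) >= 0) by nra. nra. }
  unfold coefB.
  replace ((Kc / lam + INR p * deltamax th p * Kc / (1 - exp (- lam * psiw th p))) * G) with
    (Kc * G / lam + deltamax th p * G * Kc * (INR p / (1 - exp (- lam * psiw th p)))) by (field; split; lra).
  lra.
Qed.

Lemma w_rec : forall k, wS th a g (k + 1) =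
  (1 - delta th k * a) * Yl th a g k (s k) + delta th k * g k (s k).
Proof.
  intros k. unfold wS at 1. rewrite Series_incr_1 by apply ex_term.
  assert (H0 : term th a g (k + 1) 0 = cc th a g k).
  { unfold term. simpl Z.of_nat. replace (k + 1 - 1 - 0)%Z with k by lia. replace (k + 1 - 1)%Z with k by lia.
    replace (k + 1 - 0)%Z with (k + 1)%Z by lia. rewrite Pp_empty, Rminus_diag, Rmult_0_r, exp_0. ring. }
  assert (HS : forall n, term th a g (k + 1) (S n) =
     ((1 - delta th k * a) * exp (- a * (s k - s (k - 1)))) * term th a g k n).
  { intros n. unfold term. rewrite Nat2Z.inj_succ.
    replace (k + 1 - 1 - Z.succ (Z.of_nat n))%Z with (k - 1 - Z.of_nat n)%Z by lia.
    replace (k + 1 - 1)%Z with k by lia.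
    replace (k + 1 - Z.succ (Z.of_nat n))%Z with (k - Z.of_nat n)%Z by lia.
    rewrite (Pp_last th a (k - Z.of_nat n) k) by lia.
    rewrite <- (exp_split a (s k) (s (k - 1)) (s (k - 1 - Z.of_nat n))). ring. }
  rewrite H0, (Series_ext _ _ HS), Series_scal_l. fold (wS th a g k).
  unfold cc, Yl. ring.
Qed.

Lemma not_sk : forall k t, s (k - 1) < t < s k -> forall j, t <> s j.
Proof.
  intros k t Ht j E. subst t.
  destruct (Z_le_gt_dec j (k - 1)).
  - pose proof (sk_le th Hth_inc j (k - 1) l). lra.
  - pose proof (sk_le th Hth_inc k j ltac:(lia)). lra.
Qed.

Lemma lin_unique : forall (psi : R -> R) (RL : Z -> R) B,
  (forall k t, s (k - 1) < t < s k -> derivable_pt_lim psi t (- a * psi t + g k t)) ->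
  (forall k, left_cont psi (s k)) ->
  (forall k, right_lim psi (s k) (RL k)) ->
  (forall k, RL k - psi (s k) = - delta th k * a * psi (s k) + delta th k * g k (s k)) ->
  (forall t, Rabs (psi t) <= B) ->
  (forall k, RL (k - 1)%Z = wS th a g k) /\ (forall k t, s (k - 1) < t <= s k -> psi t = Yl th a g k t).
Proof.
  intros psi RL B Hd Hl Hr Hj HB.
  assert (Step1 : forall k, exists c, (forall t, s (k - 1) < t <= s k -> psi t = Yl th a g k t + c * exp (- a * t))
                    /\ RL (k - 1)%Z = wS th a g k + c * exp (- a * s (k - 1))).
  { intros k.
    assert (Hk : s (k - 1) < s k) by (apply sk_lt; auto; lia).
    destruct (ode_const (fun t => psi t - Yl th a g k t) (s (k - 1)) (s k) a Hk) as [c Hc].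
    { intros t Ht. pose proof (derivable_pt_lim_minus _ _ _ _ _ (Hd k t Ht) (Y_deriv k t)) as H.
      unfold minus_fct in H. replace (- a * (psi t - Yl th a g k t)) with
        (- a * psi t + g k t - (- a * Yl th a g k t + g k t)) by ring. exact H. }
    assert (HF : forall x, continuity_pt (fun t => Yl th a g k t + c * exp (- a * t)) x).
    { intros x. apply derivable_continuous_pt.
      exists (- a * Yl th a g k x + g k x + c * (- a * exp (- a * x))).
      apply derivable_pt_lim_plus; [apply Y_deriv|].
      apply is_derive_Reals. auto_derive; auto. ring. }
    exists c. split.
    - intros t Ht. destruct (Req_dec t (s k)).
      + subst t. apply (left_lim_unique psi (fun t => Yl th a g k t + c * exp (- a * t)) (s k) (s k - s (k - 1))).
        * lra.
        * apply Hl.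
        * apply HF.
        * intros y Hy. specialize (Hc y ltac:(lra)). simpl in Hc. lra.
      + specialize (Hc t ltac:(lra)). simpl in Hc. lra.
    - pose proof (right_lim_unique psi (fun t => Yl th a g k t + c * exp (- a * t)) (s (k - 1)) (RL (k - 1)%Z) (s k - s (k - 1))) as H.
      cbv beta in H. rewrite Y_left in H. apply H.
      + lra.
      + apply Hr.
      + apply HF.
      + intros y Hy. specialize (Hc y ltac:(lra)). simpl in Hc. lra. }
  set (D := fun k : Z => RL (k - 1)%Z - wS th a g k).
  assert (Rec : forall k, D (k + 1)%Z = (1 - delta th k * a) * exp (- a * (s k - s (k - 1))) * D k).
  { intros k. destruct (Step1 k) as [c [H1 H2]].
    assert (Hk : s (k - 1) < s k) by (apply sk_lt; auto; lia).
    specialize (H1 (s k) ltac:(lra)).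
    unfold D. replace (k + 1 - 1)%Z with k by lia. rewrite w_rec.
    assert (RL k = (1 - delta th k * a) * psi (s k) + delta th k * g k (s k)) by (rewrite <- (Rplus_0_r (RL k)); pose proof (Hj k); lra).
    rewrite H. rewrite H2, H1.
    replace (exp (- a * s k)) with (exp (- a * (s k - s (k - 1))) * exp (- a * s (k - 1))) by (rewrite <- exp_plus; f_equal; ring).
    ring. }
  assert (Iter : forall (n : nat) k, D k = exp (- a * (s (k - 1) - s (k - 1 - Z.of_nat n))) * Pp th a (k - Z.of_nat n) (k - 1) * D (k - Z.of_nat n)%Z).
  { induction n; intros k.
    - simpl. rewrite !Z.sub_0_r, Rminus_diag, Rmult_0_r, exp_0.
      replace (Pp th a k (k - 1)) with 1 by (rewrite <- (Pp_empty th a (k - 1)) at 1; f_equal; lia). ring.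
    - rewrite IHn. rewrite Nat2Z.inj_succ.
      pose proof (Rec (k - Z.succ (Z.of_nat n))%Z) as R1.
      replace (k - Z.succ (Z.of_nat n) + 1)%Z with (k - Z.of_nat n)%Z in R1 by lia.
      rewrite R1.
      rewrite (Pp_first th a (k - Z.succ (Z.of_nat n)) (k - 1)) by lia.
      replace (k - Z.succ (Z.of_nat n) + 1)%Z with (k - Z.of_nat n)%Z by lia.
      replace (k - Z.succ (Z.of_nat n) - 1)%Z with (k - 1 - Z.succ (Z.of_nat n))%Z by lia.
      replace (k - 1 - Z.of_nat n)%Z with (k - Z.succ (Z.of_nat n))%Z by lia.
      rewrite <- (exp_split a (s (k - 1)) (s (k - Z.succ (Z.of_nat n))) (s (k - 1 - Z.succ (Z.of_nat n)))).
      ring. }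
  assert (HDb : forall k, Rabs (D k) <= B + coefB * G).
  { intros k. unfold D.
    assert (H1 : Rabs (RL (k - 1)%Z) <= B) by (apply (rlim_bound psi (s (k - 1)) _ 1); auto; lra).
    assert (Hk : s (k - 1) < s k) by (apply sk_lt; auto; lia).
    assert (H2 : Rabs (wS th a g k) <= coefB * G).
    { rewrite <- Y_left. apply (bound_at_left _ _ (s k - s (k - 1))); [apply Y_cont|lra|].
      intros y Hy. apply Y_bound. lra. }
    eapply Rle_trans; [apply Rabs_triang|]. rewrite Rabs_Ropp. lra. }
  assert (HD0 : forall k, D k = 0).
  { intros k. pose proof (psiw_pos th omega p Hth_inc Homega Hper) as Hps.
    assert (Hk : s (k - 1) < s k) by (apply sk_lt; auto; lia).
    apply (lim_zero_geom _ (exp (a * (s k - s (k - 1))) * Kc * (B + coefB * G)) (lam * psiw th p)); [nra|].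
    intros q. rewrite (Iter (p * q)%nat k).
    set (j := (k - 1 - Z.of_nat (p * q))%Z).
    assert (Hj' : (j <= k - 1)%Z) by (unfold j; lia).
    pose proof (B_bound k j (s k) Hj' ltac:(lra)) as HBb.
    assert (Hsj : s (k - 1) = s j + INR q * psiw th p).
    { pose proof (sk_period_mult th omega p Hper j q) as E.
      replace (j + Z.of_nat p * Z.of_nat q)%Z with (k - 1)%Z in E by (unfold j; rewrite Nat2Z.inj_mul; lia). auto. }
    replace (k - Z.of_nat (p * q))%Z with (j + 1)%Z by (unfold j; lia).
    replace (exp (- a * (s (k - 1) - s j))) with (exp (a * (s k - s (k - 1))) * exp (- a * (s k - s j)))
      by (rewrite <- exp_plus; f_equal; ring).
    rewrite !Rabs_mult, (Rabs_right (exp (a * _))) by (left; apply exp_pos).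
    assert (Hexp : exp (- lam * (s k - s j)) <= exp (- (lam * psiw th p) * INR q)).
    { apply exp_mono. assert (- lam * (s k - s j) <= - lam * (s (k - 1) - s j)) by nra. rewrite Hsj in H. nra. }
    pose proof (HDb (j + 1)%Z). pose proof (exp_pos (a * (s k - s (k - 1)))).
    pose proof (Rabs_pos (exp (- a * (s k - s j)))). pose proof (Rabs_pos (Pp th a (j + 1) (k - 1))).
    pose proof (Rabs_pos (D (j + 1)%Z)).
    assert (Rabs (exp (- a * (s k - s j))) * Rabs (Pp th a (j + 1) (k - 1)) <= Kc * exp (- (lam * psiw th p) * INR q)).
    { rewrite <- Rabs_mult. eapply Rle_trans; [apply HBb|]. apply Rmult_le_compat_l; lra. }
    replace (exp (a * (s k - s (k - 1))) * Rabs (exp (- a * (s k - s j))) * Rabs (Pp th a (j + 1) (k - 1)) * Rabs (D (j + 1)%Z))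
      with (exp (a * (s k - s (k - 1))) * ((Rabs (exp (- a * (s k - s j))) * Rabs (Pp th a (j + 1) (k - 1))) * Rabs (D (j + 1)%Z))) by ring.
    replace (exp (a * (s k - s (k - 1))) * Kc * (B + coefB * G) * exp (- (lam * psiw th p) * INR q)) with
      (exp (a * (s k - s (k - 1))) * ((Kc * exp (- (lam * psiw th p) * INR q)) * (B + coefB * G))) by ring.
    apply Rmult_le_compat_l; [lra|]. apply Rmult_le_compat; auto. nra. }
  split.
  - intros k. pose proof (HD0 k). unfold D in H. lra.
  - intros k t Ht. destruct (Step1 k) as [c [H1 H2]].
    pose proof (HD0 k) as H0. unfold D in H0.
    assert (c = 0).
    { assert (c * exp (- a * s (k - 1)) = 0) by lra. pose proof (exp_pos (- a * s (k - 1))).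
      destruct (Rmult_integral _ _ H); auto. lra. }
    rewrite H1 by auto. subst c. ring.
Qed.

Lemma Y_bound_closed : forall k t, s (k - 1) <= t <= s k -> Rabs (Yl th a g k t) <= coefB * G.
Proof.
  intros k t Ht. assert (Hk : s (k - 1) < s k) by (apply sk_lt; auto; lia).
  destruct (Req_dec t (s (k - 1))).
  - subst t. apply (bound_at_left _ _ (s k - s (k - 1))); [apply Y_cont|lra|].
    intros y Hy. apply Y_bound. lra.
  - apply Y_bound. lra.
Qed.

End Lin.

Lemma exp_cont : forall c z, continuity_pt (fun z => exp (c * z)) z.
Proof. intros. apply derivable_continuous_pt. exists (c * exp (c * z)). apply is_derive_Reals. auto_derive; auto. ring. Qed.

Lemma Jr_minus : forall th a g1 g2 k t, (forall k t, continuity_pt (g1 k) t) -> (forall k t, continuity_pt (g2 k) t) ->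
  Jr th a (fun k t => g1 k t - g2 k t) k t = Jr th a g1 k t - Jr th a g2 k t.
Proof.
  intros th a g1 g2 k t H1 H2. unfold Jr.
  rewrite <- minusR. rewrite <- (@RInt_minus R_CompleteNormedModule).
  - apply RInt_ext. intros. change (exp (a * x) * (g1 k x - g2 k x) = exp (a * x) * g1 k x - exp (a * x) * g2 k x). ring.
  - apply exR. intros. apply continuity_pt_mult; auto. apply exp_cont.
  - apply exR. intros. apply continuity_pt_mult; auto. apply exp_cont.
Qed.

Lemma Yl_minus : forall th a g1 g2 k t, (forall k t, continuity_pt (g1 k) t) -> (forall k t, continuity_pt (g2 k) t) ->
  (forall k, ex_series (term th a g1 k)) -> (forall k, ex_series (term th a g2 k)) ->
  Yl th a (fun k t => g1 k t - g2 k t) k t = Yl th a g1 k t - Yl th a g2 k t.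
Proof.
  intros th a g1 g2 k t H1 H2 E1 E2.
  assert (HJ : forall k t, J th a (fun k t => g1 k t - g2 k t) k t = J th a g1 k t - J th a g2 k t).
  { intros. unfold J. rewrite Jr_minus by auto. ring. }
  assert (HT : forall n, term th a (fun k t => g1 k t - g2 k t) k n = term th a g1 k n - term th a g2 k n).
  { intros. unfold term, cc. rewrite HJ. ring. }
  unfold Yl, wS. rewrite (Series_ext _ _ HT), Series_minus by auto. rewrite HJ. ring.
Qed.

Lemma in_cells_list : forall m n i j, in_cells m n i j <-> In (i, j) (cells m n).
Proof.
  intros. unfold cells, in_cells. rewrite in_prod_iff, !in_seq. lia.
Qed.

Lemma vnorm_ge : forall m n v i j, in_cells m n i j -> Rabs (v i j) <= vnorm m n v.
Proof.
  intros. unfold vnorm. apply fold_max_in.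
  apply in_cells_list in H. apply (in_map (fun ij => Rabs (v (fst ij) (snd ij))) _ _ H).
Qed.

Lemma fold_max_le : forall l d B, d <= B -> (forall x, In x l -> x <= B) -> fold_right Rmax d l <= B.
Proof.
  induction l; intros d B Hd H; simpl; auto.
  apply Rmax_lub; [apply H; left; auto|apply IHl; auto; intros; apply H; right; auto].
Qed.

Lemma vnorm_le : forall m n v B, 0 <= B -> (forall i j, in_cells m n i j -> Rabs (v i j) <= B) -> vnorm m n v <= B.
Proof.
  intros. unfold vnorm. apply fold_max_le; auto.
  intros x Hx. apply in_map_iff in Hx. destruct Hx as [[i j] [<- Hij]].
  apply H0. apply in_cells_list. auto.
Qed.

Lemma maxij_ge : forall m n g i j, in_cells m n i j -> g i j <= maxij m n g.
Proof.
  intros. unfold maxij. apply fold_max_in.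
  apply in_cells_list in H. apply (in_map (fun ij => g (fst ij) (snd ij)) _ _ H).
Qed.

Lemma minij_le : forall m n g i j, in_cells m n i j -> minij m n g <= g i j.
Proof.
  intros. unfold minij. apply in_cells_list in H.
  assert (Hm : forall l d x, In x l -> fold_right Rmin d l <= x).
  { induction l; intros d x Hx; simpl in *; [contradiction|].
    destruct Hx as [<-|Hx]; [apply Rmin_l|]. eapply Rle_trans; [apply Rmin_r|apply IHl; auto]. }
  apply Hm. apply (in_map (fun ij => g (fst ij) (snd ij)) _ _ H).
Qed.

Definition nbl m n r i j := filter (in_nbhd r i j) (cells m n).

Lemma nbl_cells : forall m n r i j x, In x (nbl m n r i j) -> in_cells m n (fst x) (snd x).
Proof.
  intros. unfold nbl in H. apply filter_In in H. destruct H. destruct x. apply in_cells_list. auto.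
Qed.

Lemma nbsum_eq : forall m n r i j g, nbsum m n r i j g = fold_right Rplus 0 (map (fun hl => g (fst hl) (snd hl)) (nbl m n r i j)).
Proof. reflexivity. Qed.

Lemma fsum_le : forall (l : list (nat * nat)) (g1 g2 : nat -> nat -> R),
  (forall x, In x l -> g1 (fst x) (snd x) <= g2 (fst x) (snd x)) ->
  fold_right Rplus 0 (map (fun hl => g1 (fst hl) (snd hl)) l) <= fold_right Rplus 0 (map (fun hl => g2 (fst hl) (snd hl)) l).
Proof.
  induction l; intros; simpl; [lra|]. apply Rplus_le_compat; [apply H; left; auto|apply IHl; intros; apply H; right; auto].
Qed.

Lemma fsum_scal : forall (l : list (nat * nat)) c (g : nat -> nat -> R),
  fold_right Rplus 0 (map (fun hl => c * g (fst hl) (snd hl)) l) = c * fold_right Rplus 0 (map (fun hl => g (fst hl) (snd hl)) l).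
Proof. induction l; intros; simpl; [ring|rewrite IHl; ring]. Qed.

Lemma fsum_minus : forall (l : list (nat * nat)) (g1 g2 : nat -> nat -> R),
  fold_right Rplus 0 (map (fun hl => g1 (fst hl) (snd hl) - g2 (fst hl) (snd hl)) l) =
  fold_right Rplus 0 (map (fun hl => g1 (fst hl) (snd hl)) l) - fold_right Rplus 0 (map (fun hl => g2 (fst hl) (snd hl)) l).
Proof. induction l; intros; simpl; [ring|rewrite IHl; ring]. Qed.

Lemma fsum_abs : forall (l : list (nat * nat)) (g : nat -> nat -> R),
  Rabs (fold_right Rplus 0 (map (fun hl => g (fst hl) (snd hl)) l)) <= fold_right Rplus 0 (map (fun hl => Rabs (g (fst hl) (snd hl))) l).
Proof.
  induction l; intros; simpl; [rewrite Rabs_R0; lra|].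
  eapply Rle_trans; [apply Rabs_triang|]. specialize (IHl g). lra.
Qed.

Lemma fsum_cont : forall (l : list (nat * nat)) (G : R -> nat -> nat -> R) t0,
  (forall x, In x l -> continuity_pt (fun t => G t (fst x) (snd x)) t0) ->
  continuity_pt (fun t => fold_right Rplus 0 (map (fun hl => G t (fst hl) (snd hl)) l)) t0.
Proof.
  induction l; intros G t0 H; simpl.
  - apply continuity_pt_const. intros x y. reflexivity.
  - apply (continuity_pt_plus (fun t => G t (fst a) (snd a)) (fun t => fold_right Rplus 0 (map (fun hl => G t (fst hl) (snd hl)) l))).
    + apply H. left. auto.
    + apply IHl. intros. apply H. right. auto.
Qed.

Lemma nbsum_nonneg : forall m n r i j g, (forall h l, in_cells m n h l -> 0 <= g h l) -> 0 <= nbsum m n r i j g.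
Proof.
  intros. rewrite nbsum_eq. replace 0 with (fold_right Rplus 0 (map (fun hl => (fun _ _ => 0) (fst hl) (snd hl)) (nbl m n r i j))) at 1.
  - apply (fsum_le _ (fun _ _ => 0)). intros. apply H. apply (nbl_cells m n r i j). auto.
  - induction (nbl m n r i j); simpl; auto. rewrite IHl. ring.
Qed.

Section NlSec.
Variables (m n r : nat) (C : nat -> nat -> nat -> nat -> R) (f : R -> R) (Mf Lf : R).
Hypothesis HC : forall i j h l, in_cells m n i j -> in_cells m n h l -> 0 <= C i j h l.
Hypothesis HMf : forall x, Rabs (f x) <= Mf.
Hypothesis HLf : forall x1 x2, Rabs (f x1 - f x2) <= Lf * Rabs (x1 - x2).
Hypothesis HLf0 : 0 <= Lf.

Lemma Sb : forall i j (y : Vec), in_cells m n i j ->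
  Rabs (nbsum m n r i j (fun h l => C i j h l * f (y h l))) <= nbsum m n r i j (C i j) * Mf.
Proof.
  intros i j y Hij. rewrite !nbsum_eq. eapply Rle_trans; [apply (fsum_abs _ (fun h l => C i j h l * f (y h l)))|].
  rewrite Rmult_comm, <- fsum_scal. apply (fsum_le _ (fun h l => Rabs (C i j h l * f (y h l))) (fun h l => Mf * C i j h l)). intros x Hx. simpl.
  pose proof (HC i j (fst x) (snd x) Hij (nbl_cells _ _ _ _ _ _ Hx)).
  rewrite Rabs_mult, Rabs_right by lra. rewrite (Rmult_comm Mf). apply Rmult_le_compat_l; auto.
Qed.

Lemma Nl_bound : forall i j (y : Vec) H, in_cells m n i j -> Rabs (y i j) <= H ->
  Rabs (Nl m n r C f y i j) <= nbsum m n r i j (C i j) * Mf * H.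
Proof.
  intros i j y H Hij Hy. unfold Nl. rewrite Rabs_mult.
  apply Rmult_le_compat; auto; try apply Rabs_pos. apply Sb. auto.
Qed.

Lemma Nl_lip : forall i j (y y' : Vec) H0 D, in_cells m n i j ->
  Rabs (y i j) <= H0 -> (forall h l, in_cells m n h l -> Rabs (y h l - y' h l) <= D) ->
  Rabs (Nl m n r C f y i j - Nl m n r C f y' i j) <= nbsum m n r i j (C i j) * (Mf + H0 * Lf) * D.
Proof.
  intros i j y y' H0 D Hij Hy HD. unfold Nl.
  set (S1 := nbsum m n r i j (fun h l => C i j h l * f (y h l))).
  set (S2 := nbsum m n r i j (fun h l => C i j h l * f (y' h l))).
  assert (HS : Rabs (S1 - S2) <= nbsum m n r i j (C i j) * (Lf * D)).
  { unfold S1, S2. rewrite !nbsum_eq. rewrite <- (fsum_minus _ (fun h l => C i j h l * f (y h l)) (fun h l => C i j h l * f (y' h l))).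
    eapply Rle_trans; [apply (fsum_abs _ (fun h l => C i j h l * f (y h l) - C i j h l * f (y' h l)))|].
    rewrite Rmult_comm, <- fsum_scal.
    apply (fsum_le _ (fun h l => Rabs (C i j h l * f (y h l) - C i j h l * f (y' h l))) (fun h l => Lf * D * C i j h l)). intros x Hx. simpl.
    pose proof (nbl_cells _ _ _ _ _ _ Hx) as Hc.
    pose proof (HC i j (fst x) (snd x) Hij Hc).
    replace (C i j (fst x) (snd x) * f (y (fst x) (snd x)) - C i j (fst x) (snd x) * f (y' (fst x) (snd x)))
      with (C i j (fst x) (snd x) * (f (y (fst x) (snd x)) - f (y' (fst x) (snd x)))) by ring.
    rewrite Rabs_mult, (Rabs_right (C _ _ _ _)) by lra. rewrite (Rmult_comm (Lf * D)). apply Rmult_le_compat_l; auto.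
    eapply Rle_trans; [apply HLf|]. apply Rmult_le_compat_l; auto. }
  assert (HS2 : Rabs S2 <= nbsum m n r i j (C i j) * Mf) by (apply Sb; auto).
  pose proof (HD i j Hij) as HDij.
  assert (HD0 : 0 <= D) by (eapply Rle_trans; [apply Rabs_pos|apply HDij]).
  assert (HH0 : 0 <= H0) by (eapply Rle_trans; [apply Rabs_pos|apply Hy]).
  assert (HN : 0 <= nbsum m n r i j (C i j)) by (apply nbsum_nonneg; intros; apply HC; auto).
  replace (S1 * y i j - S2 * y' i j) with ((S1 - S2) * y i j + S2 * (y i j - y' i j)) by ring.
  eapply Rle_trans; [apply Rabs_triang|]. rewrite !Rabs_mult.
  assert (Rabs (S1 - S2) * Rabs (y i j) <= nbsum m n r i j (C i j) * (Lf * D) * H0)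
    by (apply Rmult_le_compat; auto; apply Rabs_pos).
  assert (Rabs S2 * Rabs (y i j - y' i j) <= nbsum m n r i j (C i j) * Mf * D)
    by (apply Rmult_le_compat; auto; apply Rabs_pos).
  nra.
Qed.

Lemma Nl_cont : forall i j (Y : R -> Vec) t0, continuity f ->
  (forall h l, in_cells m n h l -> continuity_pt (fun t => Y t h l) t0) -> in_cells m n i j ->
  continuity_pt (fun t => Nl m n r C f (Y t) i j) t0.
Proof.
  intros i j Y t0 Hf HY Hij. unfold Nl.
  apply (continuity_pt_mult (fun t => nbsum m n r i j (fun h l => C i j h l * f (Y t h l))) (fun t => Y t i j)); [|auto].
  unfold nbsum. fold (nbl m n r i j).
  apply (fsum_cont _ (fun t h l => C i j h l * f (Y t h l))). intros x Hx.
  apply (continuity_pt_mult (fun _ => C i j (fst x) (snd x)) (fun t => f (Y t (fst x) (snd x)))).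
  - apply continuity_pt_const. intros u v. reflexivity.
  - apply (continuity_pt_comp (fun t => Y t (fst x) (snd x)) f); [|apply Hf].
    apply HY. apply (nbl_cells _ _ _ _ _ _ Hx).
Qed.

End NlSec.

Lemma vnorm_nonneg : forall m n v, 0 <= vnorm m n v.
Proof. intros. unfold vnorm. apply fold_max_ge_d. Qed.

Definition clamp (th : Z -> R) (k : Z) (t : R) : R := Rmax (sk th (k - 1)) (Rmin (sk th k) t).

Lemma clamp_lip : forall th k x y, Rabs (clamp th k x - clamp th k y) <= Rabs (x - y).
Proof.
  intros. unfold clamp, Rmax, Rmin. repeat destruct Rle_dec; unfold Rabs; repeat destruct Rcase_abs; lra.
Qed.

Lemma clamp_cont : forall th k t, continuity_pt (clamp th k) t.
Proof.
  intros. apply cont_eps. intros e He. exists e. split; auto. intros y Hy.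
  eapply Rle_lt_trans; [apply clamp_lip|auto].
Qed.

Lemma clamp_id : forall th k t, sk th (k - 1) <= t <= sk th k -> clamp th k t = t.
Proof. intros. unfold clamp, Rmax, Rmin. repeat destruct Rle_dec; lra. Qed.

Lemma clamp_low : forall th k t, sk th (k - 1) <= sk th k -> t <= sk th (k - 1) -> clamp th k t = sk th (k - 1).
Proof. intros. unfold clamp, Rmax, Rmin. repeat destruct Rle_dec; lra. Qed.

Lemma clamp_high : forall th k t, sk th (k - 1) <= sk th k -> sk th k <= t -> clamp th k t = sk th k.
Proof. intros. unfold clamp, Rmax, Rmin. repeat destruct Rle_dec; lra. Qed.

Lemma clamp_in : forall th k t, sk th (k - 1) <= sk th k -> sk th (k - 1) <= clamp th k t <= sk th k.
Proof. intros. unfold clamp, Rmax, Rmin. repeat destruct Rle_dec; lra. Qed.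

Definition gF m n r C f (zeta : Z -> Vec) th (Y : Z -> R -> Vec) (i j : nat) (k : Z) (t : R) : R :=
  zeta k i j - Nl m n r C f (Y k (clamp th k t)) i j.

Definition TT m n r A C f zeta th (Y : Z -> R -> Vec) : Z -> R -> Vec :=
  fun k t i j => Yl th (A i j) (gF m n r C f zeta th Y i j) k (clamp th k t).


Lemma piece_cont : forall (u : R -> R) a b L, a < b -> right_lim u a L -> left_cont u b ->
  (forall t, a < t < b -> continuity_pt u t) ->
  forall t0, continuity_pt (fun t => if Rle_dec t a then L else if Rle_dec t b then u t else u b) t0.
Proof.
  intros u a b L Hab Hr Hl Hc t0.
  destruct (Rlt_le_dec t0 a) as [H1|H1].
  - apply (cont_loc _ (fun _ => L) _ (a - t0)); [lra| |apply continuity_pt_const; intros x y; reflexivity].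
    intros y Hy. destruct (Rle_dec y a); auto. exfalso. apply n. apply Rabs_def2 in Hy. lra.
  - destruct (Req_dec t0 a) as [E|E].
    + subst t0. apply cont_eps. intros e He. destruct (Hr e He) as [d [Hd H]].
      exists (Rmin d (b - a)). split; [apply Rmin_pos; lra|]. intros y Hy.
      destruct (Rle_dec a a) as [_|N]; [|lra].
      destruct (Rle_dec y a); [rewrite Rminus_diag, Rabs_R0; auto|].
      pose proof (Rmin_l d (b - a)). pose proof (Rmin_r d (b - a)). apply Rabs_def2 in Hy.
      destruct (Rle_dec y b); [|lra]. apply H. lra.
    + destruct (Rlt_le_dec t0 b) as [H2|H2].
      * apply (cont_loc _ u _ (Rmin (t0 - a) (b - t0))); [apply Rmin_pos; lra| |apply Hc; lra].
        intros y Hy. pose proof (Rmin_l (t0 - a) (b - t0)). pose proof (Rmin_r (t0 - a) (b - t0)).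
        apply Rabs_def2 in Hy. destruct (Rle_dec y a); [lra|]. destruct (Rle_dec y b); [auto|lra].
      * destruct (Req_dec t0 b) as [E2|E2].
        -- subst t0. apply cont_eps. intros e He. destruct (Hl e He) as [d [Hd H]].
           exists (Rmin d (b - a)). split; [apply Rmin_pos; lra|]. intros y Hy.
           destruct (Rle_dec b a); [lra|]. destruct (Rle_dec b b) as [_|N]; [|lra].
           pose proof (Rmin_l d (b - a)). pose proof (Rmin_r d (b - a)). apply Rabs_def2 in Hy.
           destruct (Rle_dec y a); [lra|]. destruct (Rle_dec y b); [|rewrite Rminus_diag, Rabs_R0; auto].
           apply H. lra.
        -- apply (cont_loc _ (fun _ => u b) _ (t0 - b)); [lra| |apply continuity_pt_const; intros x y; reflexivity].
           intros y Hy. apply Rabs_def2 in Hy. destruct (Rle_dec y a); [lra|]. destruct (Rle_dec y b); [lra|auto].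
Qed.

Section Main.
Variables (m n r : nat).
Hypothesis Hm : (1 <= m)%nat.
Hypothesis Hn : (1 <= n)%nat.
Variables (A : nat -> nat -> R) (C : nat -> nat -> nat -> nat -> R) (f : R -> R)
  (th : Z -> R) (omega : R) (p : nat) (Lam : Vec -> Prop) (F : Vec -> Vec) (MF Mf Lf : R) (K : nat -> nat -> R).
Hypothesis HA : forall i j, in_cells m n i j -> 0 < A i j.
Hypothesis HC : forall i j h l, in_cells m n i j -> in_cells m n h l -> 0 <= C i j h l.
Hypothesis Hf : continuity f.
Hypothesis Hth_inc : forall k, th k < th (k + 1)%Z.
Hypothesis Homega : 0 < omega.
Hypothesis Hper : forall k, th (k + 2 * Z.of_nat p)%Z = th k + omega.
Hypothesis HMF : (exists eta0, Lam eta0 /\ vnorm m n (F eta0) = MF) /\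
         (forall eta0, Lam eta0 -> vnorm m n (F eta0) <= MF).
Hypothesis C2 : 0 < lam m n th p A.
Hypothesis C3 : 0 < Mf /\ forall x, Rabs (f x) <= Mf.
Hypothesis C4 : 0 < Lf /\ forall x1 x2, Rabs (f x1 - f x2) <= Lf * Rabs (x1 - x2).
Hypothesis HK : forall i j, in_cells m n i j -> 0 < K i j /\
          forall s tau v, tau <= s -> u_val th (A i j) s tau v ->
            Rabs v <= K i j * exp (- lam_ij th p (A i j) * (s - tau)).
Hypothesis C5 : Mf * cbar m n r th p A C K < 1 /\
        (Mf + H0 m n r th p A C K MF Mf * Lf) * cbar m n r th p A C K < 1.
Variable zeta : Z -> Vec.
Hypothesis Hz : in_Theta m n Lam F zeta.

Notation s := (sk th).
Notation H0v := (H0 m n r th p A C K MF Mf).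
Notation cb := (cbar m n r th p A C K).
Notation qq := ((Mf + H0 m n r th p A C K MF Mf * Lf) * cbar m n r th p A C K).
Notation mc := (maxij m n (fun i j => coefK th p (A i j) (K i j))).

Lemma cell11 : in_cells m n 1 1.
Proof. unfold in_cells. lia. Qed.

Lemma lam_pos : forall i j, in_cells m n i j -> 0 < lam_ij th p (A i j).
Proof.
  intros. eapply Rlt_le_trans; [apply C2|]. unfold lam. apply (minij_le m n (fun i j => lam_ij th p (A i j))). auto.
Qed.

Lemma coefK_nonneg : forall i j, in_cells m n i j -> 0 <= coefK th p (A i j) (K i j).
Proof.
  intros i j Hij. unfold coefK.
  pose proof (lam_pos i j Hij). destruct (HK i j Hij) as [HK0 _].
  pose proof (psiw_pos th omega p Hth_inc Homega Hper).
  pose proof (deltamax_pos th omega p Hth_inc Homega Hper).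
  assert (exp (- lam_ij th p (A i j) * psiw th p) < 1) by (rewrite <- exp_0; apply exp_increasing; nra).
  pose proof (pos_INR p).
  assert (0 <= K i j / lam_ij th p (A i j)) by (apply Rmult_le_pos; [lra|left; apply Rinv_0_lt_compat; auto]).
  assert (0 <= INR p * deltamax th p * K i j / (1 - exp (- lam_ij th p (A i j) * psiw th p))).
  { apply Rmult_le_pos; [|left; apply Rinv_0_lt_compat; lra]. apply Rmult_le_pos; [apply Rmult_le_pos|]; lra. }
  lra.
Qed.

Lemma nbC_nonneg : forall i j, in_cells m n i j -> 0 <= nbsum m n r i j (C i j).
Proof. intros. apply nbsum_nonneg. intros. apply HC; auto. Qed.

Lemma cbar_ge : forall i j, in_cells m n i j -> coefK th p (A i j) (K i j) * nbsum m n r i j (C i j) <= cb.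
Proof.
  intros. unfold cbar. apply (maxij_ge m n (fun i j => coefK th p (A i j) (K i j) * nbsum m n r i j (fun h l => C i j h l))). auto.
Qed.

Lemma cbar_nonneg : 0 <= cb.
Proof.
  eapply Rle_trans; [|apply (cbar_ge 1 1 cell11)].
  apply Rmult_le_pos; [apply coefK_nonneg|apply nbC_nonneg]; apply cell11.
Qed.

Lemma mc_ge : forall i j, in_cells m n i j -> coefK th p (A i j) (K i j) <= mc.
Proof. intros. apply (maxij_ge m n (fun i j => coefK th p (A i j) (K i j))). auto. Qed.

Lemma MF_nonneg : 0 <= MF.
Proof. destruct HMF as [[e [_ <-]] _]. apply vnorm_nonneg. Qed.

Lemma H0_eq : H0v = MF * mc + Mf * cb * H0v.
Proof. unfold H0. destruct C5. field. lra. Qed.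

Lemma H0_nonneg : 0 <= H0v.
Proof.
  unfold H0. destruct C5. pose proof MF_nonneg. pose proof (mc_ge 1 1 cell11). pose proof (coefK_nonneg 1 1 cell11).
  apply Rmult_le_pos; [|lra]. apply Rmult_le_pos; auto. left. apply Rinv_0_lt_compat. lra.
Qed.

Lemma q_bounds : 0 <= qq < 1.
Proof.
  split; [|apply C5]. apply Rmult_le_pos; [|apply cbar_nonneg].
  pose proof H0_nonneg. destruct C3, C4. nra.
Qed.

Lemma zeta_bound : forall k i j, in_cells m n i j -> Rabs (zeta k i j) <= MF.
Proof.
  intros k i j Hij. destruct Hz as [HL HF].
  specialize (HF (k - 1)%Z i j Hij). replace (k - 1 + 1)%Z with k in HF by lia. rewrite HF.
  eapply Rle_trans; [apply (vnorm_ge m n); auto|]. apply HMF. apply HL.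
Qed.

Lemma sk_le1 : forall k, s (k - 1) <= s k.
Proof. intros. apply sk_le; auto; lia. Qed.

Definition Adm (Y : Z -> R -> Vec) : Prop :=
  (forall k i j t, in_cells m n i j -> continuity_pt (fun t => Y k t i j) t) /\
  (forall k t i j, in_cells m n i j -> Rabs (Y k t i j) <= H0v).

Notation gFm := (gF m n r C f zeta th).
Notation T := (TT m n r A C f zeta th).

Lemma gF_cont : forall Y i j k t, Adm Y -> in_cells m n i j -> continuity_pt (gFm Y i j k) t.
Proof.
  intros Y i j k t [HYc _] Hij. unfold gF.
  apply (continuity_pt_minus (fun _ => zeta k i j) (fun t => Nl m n r C f (Y k (clamp th k t)) i j)).
  - apply continuity_pt_const. intros u v. reflexivity.
  - apply (Nl_cont m n r C f i j (fun t => Y k (clamp th k t))); auto.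
    intros h l Hhl. apply (continuity_pt_comp (clamp th k) (fun t => Y k t h l)); [apply clamp_cont|apply HYc; auto].
Qed.

Lemma gF_bound : forall Y i j k t, Adm Y -> in_cells m n i j ->
  Rabs (gFm Y i j k t) <= MF + nbsum m n r i j (C i j) * Mf * H0v.
Proof.
  intros Y i j k t [_ HYb] Hij. unfold gF.
  eapply Rle_trans; [apply Rabs_triang|]. rewrite Rabs_Ropp.
  apply Rplus_le_compat; [apply zeta_bound; auto|].
  apply Nl_bound; auto. apply C3.
Qed.

Lemma HKb : forall i j, in_cells m n i j -> forall s tau v, tau <= s -> u_val th (A i j) s tau v ->
  Rabs v <= K i j * exp (- lam_ij th p (A i j) * (s - tau)).
Proof. intros. apply (HK i j H); auto. Qed.

Lemma Kpos : forall i j, in_cells m n i j -> 0 < K i j.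
Proof. intros. apply (HK i j H). Qed.

Lemma YB : forall i j g G k t, in_cells m n i j -> (forall k t, continuity_pt (g k) t) -> (forall k t, Rabs (g k t) <= G) ->
  s (k - 1) <= t <= s k -> Rabs (Yl th (A i j) g k t) <= coefK th p (A i j) (K i j) * G.
Proof.
  intros i j g G k t Hij Hg HG Ht.
  apply (Y_bound_closed th omega p Hth_inc Homega Hper (A i j) (K i j) (lam_ij th p (A i j)) (Kpos i j Hij) (lam_pos i j Hij) (HKb i j Hij) g Hg G HG k t Ht).
Qed.

Lemma T_adm : forall Y, Adm Y -> Adm (T Y).
Proof.
  intros Y HY. split.
  - intros k i j t Hij. unfold TT.
    apply (continuity_pt_comp (clamp th k) (Yl th (A i j) (gFm Y i j) k)); [apply clamp_cont|].
    apply Y_cont. intros. apply gF_cont; auto.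
  - intros k t i j Hij. unfold TT.
    eapply Rle_trans.
    + apply YB; auto. * intros. apply gF_cont; auto. * intros. apply gF_bound; auto. * apply clamp_in, sk_le1.
    + pose proof (coefK_nonneg i j Hij). pose proof (mc_ge i j Hij). pose proof (cbar_ge i j Hij).
      pose proof MF_nonneg. pose proof H0_nonneg. pose proof (nbC_nonneg i j Hij). destruct C3 as [HMf _].
      rewrite H0_eq at 2.
      assert (coefK th p (A i j) (K i j) * MF <= MF * mc) by nra.
      assert (coefK th p (A i j) (K i j) * (nbsum m n r i j (C i j) * Mf * H0v) <= Mf * cb * H0v).
      { replace (coefK th p (A i j) (K i j) * (nbsum m n r i j (C i j) * Mf * H0v)) with
          ((coefK th p (A i j) (K i j) * nbsum m n r i j (C i j)) * (Mf * H0v)) by ring.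
        replace (Mf * cb * H0v) with (cb * (Mf * H0v)) by ring.
        apply Rmult_le_compat_r; auto. nra. }
      nra.
Qed.

Lemma T_contr : forall Y Y' D, Adm Y -> Adm Y' -> 0 <= D ->
  (forall k t i j, in_cells m n i j -> Rabs (Y k t i j - Y' k t i j) <= D) ->
  (forall k t i j, in_cells m n i j -> Rabs (T Y k t i j - T Y' k t i j) <= qq * D).
Proof.
  intros Y Y' D HY HY' HD0 HD k t i j Hij. unfold TT.
  assert (Ex : forall Z, Adm Z -> forall k, ex_series (term th (A i j) (gFm Z i j) k)).
  { intros Z HZ k0.
    apply (ex_term th omega p Hth_inc Homega Hper (A i j) (K i j) (lam_ij th p (A i j)) (Kpos i j Hij) (lam_pos i j Hij) (HKb i j Hij)
      _ (fun k t => gF_cont Z i j k t HZ Hij) _ (fun k t => gF_bound Z i j k t HZ Hij)). }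
  rewrite <- Yl_minus; [| intros; apply gF_cont; auto | intros; apply gF_cont; auto | apply Ex; auto | apply Ex; auto].
  set (Gd := nbsum m n r i j (C i j) * (Mf + H0v * Lf) * D).
  eapply Rle_trans.
  - apply (YB i j _ Gd); auto.
    + intros. apply (continuity_pt_minus (gFm Y i j k0) (gFm Y' i j k0)); apply gF_cont; auto.
    + intros k0 t0. unfold gF.
      replace (zeta k0 i j - Nl m n r C f (Y k0 (clamp th k0 t0)) i j - (zeta k0 i j - Nl m n r C f (Y' k0 (clamp th k0 t0)) i j))
        with (- (Nl m n r C f (Y k0 (clamp th k0 t0)) i j - Nl m n r C f (Y' k0 (clamp th k0 t0)) i j)) by ring.
      rewrite Rabs_Ropp. apply (Nl_lip m n r C f Mf Lf).
      * intros; apply HC; auto.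
      * apply C3.
      * apply C4.
      * left; apply C4.
      * auto.
      * apply HY; auto.
      * intros. apply HD; auto.
    + apply clamp_in, sk_le1.
  - unfold Gd. pose proof (cbar_ge i j Hij). pose proof (coefK_nonneg i j Hij). pose proof (nbC_nonneg i j Hij).
    pose proof H0_nonneg. destruct C3, C4.
    assert (0 <= (Mf + H0v * Lf) * D) by (apply Rmult_le_pos; nra).
    replace (coefK th p (A i j) (K i j) * (nbsum m n r i j (C i j) * (Mf + H0v * Lf) * D)) with
      ((coefK th p (A i j) (K i j) * nbsum m n r i j (C i j)) * ((Mf + H0v * Lf) * D)) by ring.
    replace ((Mf + H0v * Lf) * cb * D) with (cb * ((Mf + H0v * Lf) * D)) by ring.
    apply Rmult_le_compat_r; auto.
Qed.

Lemma geom_zero : forall x c q, 0 <= q < 1 -> (forall N, Rabs x <= c * q ^ N) -> x = 0.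
Proof.
  intros x c q Hq H.
  destruct (Req_dec x 0) as [|Hx]; auto. exfalso.
  assert (Hax : 0 < Rabs x) by (apply Rabs_pos_lt; auto).
  assert (Hc : 0 < c).
  { specialize (H O). simpl in H. lra. }
  destruct (pow_lt_1_zero q ltac:(rewrite Rabs_right; lra) (Rabs x / c) ltac:(apply Rdiv_lt_0_compat; lra)) as [N HN].
  specialize (HN N (le_n N)). specialize (H N).
  rewrite Rabs_right in HN by (apply Rle_ge, pow_le; lra).
  apply Rmult_lt_compat_l with (r := c) in HN; auto.
  replace (c * (Rabs x / c)) with (Rabs x) in HN by (field; lra). lra.
Qed.

Fixpoint Yn (N : nat) : Z -> R -> Vec :=
  match N with O => fun _ _ _ _ => 0 | S N' => T (Yn N') end.

Lemma Yn_adm : forall N, Adm (Yn N).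
Proof.
  induction N.
  - split.
    + intros. simpl. apply continuity_pt_const. intros u v. reflexivity.
    + intros. simpl. rewrite Rabs_R0. apply H0_nonneg.
  - simpl. apply T_adm. auto.
Qed.

Lemma Yn_diff : forall N k t i j, in_cells m n i j -> Rabs (Yn (S N) k t i j - Yn N k t i j) <= qq ^ N * H0v.
Proof.
  induction N; intros k t i j Hij.
  - simpl Yn at 2. rewrite Rminus_0_r. simpl pow. rewrite Rmult_1_l. apply (Yn_adm 1). auto.
  - change (Yn (S (S N))) with (T (Yn (S N))). change (Yn (S N)) with (T (Yn N)) at 2.
    replace (qq ^ S N * H0v) with (qq * (qq ^ N * H0v)) by (simpl; ring).
    apply T_contr; auto; try apply Yn_adm.
    apply Rmult_le_pos; [apply pow_le; apply q_bounds|apply H0_nonneg].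
Qed.

Lemma Yn_cauchy : forall N M k t i j, in_cells m n i j ->
  Rabs (Yn (N + M) k t i j - Yn N k t i j) <= H0v * qq ^ N / (1 - qq).
Proof.
  intros N M k t i j Hij. pose proof q_bounds as Hq. pose proof H0_nonneg.
  assert (HM : forall M, Rabs (Yn (N + M) k t i j - Yn N k t i j) <= H0v * qq ^ N * (1 - qq ^ M) / (1 - qq)).
  { induction M0.
    - rewrite Nat.add_0_r, Rminus_diag, Rabs_R0. simpl. rewrite Rminus_diag. unfold Rdiv. rewrite Rmult_0_r, Rmult_0_l. lra.
    - rewrite Nat.add_succ_r.
      replace (Yn (S (N + M0)) k t i j - Yn N k t i j) with
        ((Yn (S (N + M0)) k t i j - Yn (N + M0) k t i j) + (Yn (N + M0) k t i j - Yn N k t i j)) by ring.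
      eapply Rle_trans; [apply Rabs_triang|].
      pose proof (Yn_diff (N + M0) k t i j Hij) as HD. rewrite pow_add in HD.
      replace (H0v * qq ^ N * (1 - qq ^ S M0) / (1 - qq)) with
        (qq ^ N * qq ^ M0 * H0v + H0v * qq ^ N * (1 - qq ^ M0) / (1 - qq)) by (simpl; field; lra).
      lra. }
  eapply Rle_trans; [apply HM|].
  unfold Rdiv. apply Rmult_le_compat_r; [left; apply Rinv_0_lt_compat; lra|].
  assert (0 <= qq ^ M) by (apply pow_le; lra).
  assert (0 <= H0v * qq ^ N) by (apply Rmult_le_pos; auto; apply pow_le; lra). nra.
Qed.

Lemma Yn_lim : forall k t i j, in_cells m n i j -> ex_finite_lim_seq (fun N => Yn N k t i j).
Proof.
  intros k t i j Hij. apply ex_lim_seq_cauchy_corr. intros eps.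
  pose proof q_bounds as Hq. pose proof H0_nonneg.
  destruct (pow_lt_1_zero qq ltac:(rewrite Rabs_right; lra) (eps * (1 - qq) / (3 * (H0v + 1))))
    as [N HN].
  { apply Rdiv_lt_0_compat; [apply Rmult_lt_0_compat; [apply cond_pos|lra]|lra]. }
  exists N. intros a b Ha Hb.
  assert (Hbound : forall c, (N <= c)%nat -> Rabs (Yn c k t i j - Yn N k t i j) <= eps / 3).
  { intros c Hc. replace c with (N + (c - N))%nat by lia. eapply Rle_trans; [apply Yn_cauchy; auto|].
    specialize (HN N (le_n N)). rewrite Rabs_right in HN by (apply Rle_ge, pow_le; lra).
    apply Rmult_le_reg_r with (r := 1 - qq); [lra|]. unfold Rdiv at 1. rewrite Rmult_assoc, Rinv_l, Rmult_1_r by lra.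
    apply Rmult_lt_compat_l with (r := H0v + 1) in HN; [|lra].
    replace ((H0v + 1) * (eps * (1 - qq) / (3 * (H0v + 1)))) with (eps / 3 * (1 - qq)) in HN by (field; lra).
    assert (0 <= qq ^ N) by (apply pow_le; lra). nra. }
  replace (Yn a k t i j - Yn b k t i j) with ((Yn a k t i j - Yn N k t i j) - (Yn b k t i j - Yn N k t i j)) by ring.
  eapply Rle_lt_trans; [apply Rabs_triang|]. rewrite Rabs_Ropp.
  pose proof (Hbound a Ha). pose proof (Hbound b Hb). pose proof (cond_pos eps). lra.
Qed.

Definition Ystar : Z -> R -> Vec := fun k t i j => real (Lim_seq (fun N => Yn N k t i j)).

Lemma Ystar_lim : forall k t i j, in_cells m n i j -> is_lim_seq (fun N => Yn N k t i j) (Ystar k t i j).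
Proof. intros. unfold Ystar. apply Lim_seq_correct'. apply Yn_lim. auto. Qed.

Lemma Ystar_near : forall N k t i j, in_cells m n i j -> Rabs (Ystar k t i j - Yn N k t i j) <= H0v * qq ^ N / (1 - qq).
Proof.
  intros N k t i j Hij. pose proof (Ystar_lim k t i j Hij) as Hl.
  apply (is_lim_seq_incr_n _ N) in Hl.
  replace (Ystar k t i j - Yn N k t i j) with (1 * Ystar k t i j + - Yn N k t i j) by ring.
  apply (lim_seq_bound _ _ 1 (- Yn N k t i j) _ Hl). intros M.
  replace (1 * Yn (M + N)%nat k t i j + - Yn N k t i j) with (Yn (N + M)%nat k t i j - Yn N k t i j)
    by (rewrite Nat.add_comm; ring).
  apply Yn_cauchy. auto.
Qed.

Lemma Ystar_adm : Adm Ystar.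
Proof.
  pose proof q_bounds as Hq. pose proof H0_nonneg. split.
  - intros k i j t Hij. apply cont_eps. intros eps Heps.
    destruct (pow_lt_1_zero qq ltac:(rewrite Rabs_right; lra) (eps * (1 - qq) / (3 * (H0v + 1))))
      as [N HN].
    { apply Rdiv_lt_0_compat; [apply Rmult_lt_0_compat; lra|lra]. }
    specialize (HN N (le_n N)). rewrite Rabs_right in HN by (apply Rle_ge, pow_le; lra).
    assert (Hnn : H0v * qq ^ N / (1 - qq) < eps / 3).
    { apply Rmult_lt_reg_r with (r := 1 - qq); [lra|]. unfold Rdiv at 1. rewrite Rmult_assoc, Rinv_l, Rmult_1_r by lra.
      apply Rmult_lt_compat_l with (r := H0v + 1) in HN; [|lra].
      replace ((H0v + 1) * (eps * (1 - qq) / (3 * (H0v + 1)))) with (eps / 3 * (1 - qq)) in HN by (field; lra).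
      assert (0 <= qq ^ N) by (apply pow_le; lra). nra. }
    destruct (proj1 (cont_eps _ _) (proj1 (Yn_adm N) k i j t Hij) (eps / 3) ltac:(lra)) as [d [Hd Hc]].
    exists d. split; auto. intros y Hy.
    replace (Ystar k y i j - Ystar k t i j) with
      ((Ystar k y i j - Yn N k y i j) + (Yn N k y i j - Yn N k t i j) - (Ystar k t i j - Yn N k t i j)) by ring.
    pose proof (Ystar_near N k y i j Hij). pose proof (Ystar_near N k t i j Hij). specialize (Hc y Hy).
    eapply Rle_lt_trans; [apply Rabs_triang|]. rewrite Rabs_Ropp.
    eapply Rle_lt_trans; [apply Rplus_le_compat_r; apply Rabs_triang|]. lra.
  - intros k t i j Hij. pose proof (Ystar_lim k t i j Hij) as Hl.
    replace (Ystar k t i j) with (1 * Ystar k t i j + 0) by ring.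
    apply (lim_seq_bound _ _ 1 0 _ Hl). intros M. rewrite Rmult_1_l, Rplus_0_r. apply (Yn_adm M). auto.
Qed.

Lemma Ystar_fix : forall k t i j, in_cells m n i j -> T Ystar k t i j = Ystar k t i j.
Proof.
  intros k t i j Hij. pose proof q_bounds as Hq. pose proof H0_nonneg.
  assert (T Ystar k t i j - Ystar k t i j = 0); [|lra].
  apply (geom_zero _ (2 * H0v / (1 - qq)) qq Hq). intros N.
  replace (T Ystar k t i j - Ystar k t i j) with
    ((T Ystar k t i j - T (Yn N) k t i j) - (Ystar k t i j - Yn (S N) k t i j)) by (simpl; ring).
  eapply Rle_trans; [apply Rabs_triang|]. rewrite Rabs_Ropp.
  assert (H1 : Rabs (T Ystar k t i j - T (Yn N) k t i j) <= qq * (H0v * qq ^ N / (1 - qq))).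
  { apply T_contr; auto. apply Ystar_adm. apply Yn_adm.
    apply Rmult_le_pos; [apply Rmult_le_pos; auto; apply pow_le; lra|left; apply Rinv_0_lt_compat; lra].
    intros. apply Ystar_near; auto. }
  pose proof (Ystar_near (S N) k t i j Hij) as H2. simpl pow in H2.
  assert (0 <= qq ^ N) by (apply pow_le; lra).
  replace (2 * H0v / (1 - qq) * qq ^ N) with (2 * (H0v * qq ^ N / (1 - qq))) by (field; lra).
  replace (H0v * (qq * qq ^ N) / (1 - qq)) with (qq * (H0v * qq ^ N / (1 - qq))) in H2 by (field; lra).
  assert (0 <= H0v * qq ^ N / (1 - qq)) by (apply Rmult_le_pos; [apply Rmult_le_pos; auto|left; apply Rinv_0_lt_compat; lra]).
  nra.
Qed.

Lemma fix_unique : forall Z, Adm Z -> (forall k t i j, in_cells m n i j -> T Z k t i j = Z k t i j) ->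
  forall k t i j, in_cells m n i j -> Z k t i j = Ystar k t i j.
Proof.
  intros Z HZ HT k t i j Hij. pose proof q_bounds as Hq. pose proof H0_nonneg.
  assert (Z k t i j - Ystar k t i j = 0); [|lra].
  apply (geom_zero _ (2 * H0v) qq Hq). intros N. revert k t i j Hij.
  induction N; intros k t i j Hij.
  - simpl. rewrite Rmult_1_r. eapply Rle_trans; [apply Rabs_triang|]. rewrite Rabs_Ropp.
    pose proof (proj2 HZ k t i j Hij). pose proof (proj2 Ystar_adm k t i j Hij). lra.
  - rewrite <- (HT k t i j Hij), <- (Ystar_fix k t i j Hij).
    replace (2 * H0v * qq ^ S N) with (qq * (2 * H0v * qq ^ N)) by (simpl; ring).
    apply T_contr; auto. apply Ystar_adm.
    apply Rmult_le_pos; [lra|apply pow_le; lra].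
Qed.

Definition phi : R -> Vec := fun t => Ystar (idx th t) t.

Lemma phi_eq : forall k t, s (k - 1) < t <= s k -> phi t = Ystar k t.
Proof. intros. unfold phi. rewrite (idx_unique th omega p Hth_inc Homega Hper t k H). auto. Qed.

Notation Zf i j := (Yl th (A i j) (gFm Ystar i j)).

Lemma Ystar_on : forall k t i j, in_cells m n i j -> s (k - 1) <= t <= s k -> Ystar k t i j = Zf i j k t.
Proof. intros. rewrite <- Ystar_fix by auto. unfold TT. rewrite clamp_id; auto. Qed.

Lemma Zf_cont : forall i j k t, in_cells m n i j -> continuity_pt (Zf i j k) t.
Proof. intros. apply Y_cont. intros. apply gF_cont; auto. apply Ystar_adm. Qed.

Lemma gF_star : forall i j k t, s (k - 1) < t <= s k -> gFm Ystar i j k t = zeta k i j - Nl m n r C f (phi t) i j.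
Proof. intros. unfold gF. rewrite clamp_id by lra. rewrite phi_eq with (k := k); auto. Qed.

Lemma sk_lt1 : forall k, s (k - 1) < s k.
Proof. intros. apply sk_lt; auto; lia. Qed.

Lemma phi_sol : is_solution m n r A C f th zeta phi.
Proof.
  intros i j Hij. split; [|split; [|split]].
  - intros k t Ht.
    apply (deriv_loc _ (Zf i j k) _ _ (Rmin (t - s (k - 1)) (s k - t))); [apply Rmin_pos; lra| |].
    + intros y Hy. pose proof (Rmin_l (t - s (k - 1)) (s k - t)). pose proof (Rmin_r (t - s (k - 1)) (s k - t)).
      apply Rabs_def2 in Hy. rewrite (phi_eq k y) by lra. apply Ystar_on; auto; lra.
    + pose proof (Y_deriv th (A i j) (gFm Ystar i j) (fun k t => gF_cont Ystar i j k t Ystar_adm Hij) k t) as H.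
      rewrite gF_star in H by lra. rewrite (phi_eq k t) by lra. rewrite (Ystar_on k t) by (auto; lra).
      replace (- A i j * Zf i j k t - Nl m n r C f (Ystar k t) i j + zeta k i j) with
        (- A i j * Zf i j k t + (zeta k i j - Nl m n r C f (phi t) i j)) by (rewrite (phi_eq k t) by lra; ring).
      exact H.
  - intros t Ht. set (k := idx th t). pose proof (idx_spec th omega p Hth_inc Homega Hper t) as Hk. fold k in Hk.
    assert (t < s k) by (destruct Hk as [_ [H|H]]; auto; exfalso; apply (Ht k); auto).
    apply (cont_loc _ (Zf i j k) _ (Rmin (t - s (k - 1)) (s k - t))); [apply Rmin_pos; lra| |apply Zf_cont; auto].
    intros y Hy. pose proof (Rmin_l (t - s (k - 1)) (s k - t)). pose proof (Rmin_r (t - s (k - 1)) (s k - t)).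
    apply Rabs_def2 in Hy. rewrite (phi_eq k y) by lra. apply Ystar_on; auto; lra.
  - intros k e He. pose proof (sk_lt1 k).
    destruct (proj1 (cont_eps _ _) (Zf_cont i j k (s k) Hij) e He) as [d [Hd H1]].
    exists (Rmin d (s k - s (k - 1))). split; [apply Rmin_pos; lra|]. intros x Hx.
    pose proof (Rmin_l d (s k - s (k - 1))). pose proof (Rmin_r d (s k - s (k - 1))).
    rewrite (phi_eq k x) by lra. rewrite (phi_eq k (s k)) by lra.
    rewrite !(Ystar_on k) by (auto; lra). apply H1. rewrite Rabs_left1; lra.
  - intros k. exists (Zf i j (k + 1)%Z (s k)). pose proof (sk_lt1 k). pose proof (sk_lt1 (k + 1)).
    replace (k + 1 - 1)%Z with k in H0 by lia.
    split.
    + intros e He. destruct (proj1 (cont_eps _ _) (Zf_cont i j (k + 1)%Z (s k) Hij) e He) as [d [Hd H1]].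
      exists (Rmin d (s (k + 1) - s k)). split; [apply Rmin_pos; lra|]. intros x Hx.
      pose proof (Rmin_l d (s (k + 1) - s k)). pose proof (Rmin_r d (s (k + 1) - s k)).
      rewrite (phi_eq (k + 1) x) by (replace (k + 1 - 1)%Z with k by lia; lra).
      rewrite (Ystar_on (k + 1)) by (auto; replace (k + 1 - 1)%Z with k by lia; lra).
      apply H1. rewrite Rabs_right; lra.
    + pose proof (Y_left th (A i j) (gFm Ystar i j) (k + 1)) as HL. replace (k + 1 - 1)%Z with k in HL by lia.
      rewrite HL.
      rewrite (w_rec th omega p Hth_inc Homega Hper (A i j) (K i j) (lam_ij th p (A i j)) (Kpos i j Hij) (lam_pos i j Hij) (HKb i j Hij)
        _ (fun k t => gF_cont Ystar i j k t Ystar_adm Hij) _ (fun k t => gF_bound Ystar i j k t Ystar_adm Hij)).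
      rewrite gF_star by lra. rewrite (phi_eq k (s k)) by lra. rewrite (Ystar_on k (s k)) by (auto; lra).
      ring.
Qed.

Lemma phi_bound : forall t, vnorm m n (phi t) <= H0v.
Proof.
  intros. apply vnorm_le; [apply H0_nonneg|]. intros. unfold phi. apply Ystar_adm. auto.
Qed.

Lemma phi_unique : forall psi : R -> Vec,
  is_solution m n r A C f th zeta psi -> (forall t, vnorm m n (psi t) <= H0v) ->
  forall t i j, in_cells m n i j -> psi t i j = phi t i j.
Proof.
  intros psi Hs Hb.
  pose proof H0_nonneg as HH0.
  assert (Hpb : forall t i j, in_cells m n i j -> Rabs (psi t i j) <= H0v).
  { intros. eapply Rle_trans; [apply (vnorm_ge m n); auto|apply Hb]. }
  set (RLf := fun k i j => epsilon (inhabits 0) (fun L => right_lim (fun x => psi x i j) (s k) L /\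
        L - psi (s k) i j = - delta th k * A i j * psi (s k) i j - delta th k * Nl m n r C f (psi (s k)) i j + delta th k * zeta k i j)).
  assert (HRL : forall k i j, in_cells m n i j -> right_lim (fun x => psi x i j) (s k) (RLf k i j) /\
        RLf k i j - psi (s k) i j = - delta th k * A i j * psi (s k) i j - delta th k * Nl m n r C f (psi (s k)) i j + delta th k * zeta k i j).
  { intros k i j Hij. unfold RLf. apply epsilon_spec. apply (Hs i j Hij). }
  set (Psi := fun (k : Z) (t : R) => if Rle_dec t (s (k - 1)) then RLf (k - 1)%Z else if Rle_dec t (s k) then psi t else psi (s k)).
  assert (HPsi_mid : forall k t, s (k - 1) < t <= s k -> Psi k t = psi t).
  { intros k t Ht. unfold Psi. destruct (Rle_dec t (s (k - 1))); [lra|]. destruct (Rle_dec t (s k)); [auto|lra]. }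
  assert (HAd : Adm Psi).
  { split.
    - intros k i j t Hij. unfold Psi.
      apply (cont_loc _ (fun t => if Rle_dec t (s (k - 1)) then RLf (k - 1)%Z i j else if Rle_dec t (s k) then psi t i j else psi (s k) i j) _ 1); [lra| |].
      { intros y _. destruct (Rle_dec y (s (k - 1))); [reflexivity|]. destruct (Rle_dec y (s k)); reflexivity. }
      apply (piece_cont (fun x => psi x i j) (s (k - 1)) (s k) (RLf (k - 1)%Z i j)).
      + apply sk_lt1.
      + apply HRL; auto.
      + apply (Hs i j Hij).
      + intros t0 Ht0. apply (Hs i j Hij). intros j0 E. subst t0.
        destruct (Z_le_gt_dec j0 (k - 1)).
        * pose proof (sk_le th Hth_inc j0 (k - 1) l). lra.
        * pose proof (sk_le th Hth_inc k j0 ltac:(lia)). lra.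
    - intros k t i j Hij. unfold Psi.
      destruct (Rle_dec t (s (k - 1))); [|destruct (Rle_dec t (s k)); apply Hpb; auto].
      apply (rlim_bound (fun x => psi x i j) (s (k - 1)) _ 1); [apply HRL; auto|lra|]. intros. apply Hpb; auto. }
  assert (HT : forall k t i j, in_cells m n i j -> T Psi k t i j = Psi k t i j).
  { intros k t i j Hij.
    assert (Hex : forall k t, continuity_pt (gFm Psi i j k) t) by (intros; apply gF_cont; auto).
    assert (Hbd : forall k t, Rabs (gFm Psi i j k t) <= MF + nbsum m n r i j (C i j) * Mf * H0v) by (intros; apply gF_bound; auto).
    assert (HgP : forall k t, s (k - 1) < t <= s k -> gFm Psi i j k t = zeta k i j - Nl m n r C f (psi t) i j).
    { intros. unfold gF. rewrite clamp_id by lra. rewrite HPsi_mid; auto. }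
    destruct (lin_unique th omega p Hth_inc Homega Hper (A i j) (K i j) (lam_ij th p (A i j)) (Kpos i j Hij) (lam_pos i j Hij) (HKb i j Hij)
      _ Hex _ Hbd (fun x => psi x i j) (fun k => RLf k i j) H0v) as [U1 U2].
    - intros k0 t0 Ht0. rewrite HgP by lra.
      replace (- A i j * psi t0 i j + (zeta k0 i j - Nl m n r C f (psi t0) i j)) with
        (- A i j * psi t0 i j - Nl m n r C f (psi t0) i j + zeta k0 i j) by ring.
      apply (Hs i j Hij). auto.
    - apply (Hs i j Hij).
    - intros k0. apply HRL; auto.
    - intros k0. rewrite HgP by (pose proof (sk_lt1 k0); lra). destruct (HRL k0 i j Hij) as [_ E]. cbv beta. rewrite E. ring.
    - intros. apply Hpb; auto.
    - unfold TT. pose proof (sk_lt1 k).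
      destruct (Rle_dec t (s (k - 1))) as [H1|H1].
      + rewrite clamp_low by lra. rewrite Y_left. rewrite <- U1. unfold Psi. destruct (Rle_dec t (s (k - 1))); [auto|lra].
      + destruct (Rle_dec t (s k)) as [H2|H2].
        * rewrite clamp_id by lra. rewrite HPsi_mid by lra. symmetry. apply U2. lra.
        * rewrite clamp_high by lra. unfold Psi. destruct (Rle_dec t (s (k - 1))); [lra|].
          destruct (Rle_dec t (s k)); [lra|]. symmetry. apply U2. lra. }
  intros t i j Hij.
  pose proof (fix_unique Psi HAd HT (idx th t) t i j Hij) as E.
  pose proof (idx_spec th omega p Hth_inc Homega Hper t) as Hk.
  rewrite HPsi_mid in E by auto. unfold phi. auto.
Qed.

Lemma main_result : exists phi : R -> Vec,
      is_solution m n r A C f th zeta phi /\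
      (forall s, vnorm m n (phi s) <= H0 m n r th p A C K MF Mf) /\
      (forall psi : R -> Vec,
         is_solution m n r A C f th zeta psi ->
         (forall s, vnorm m n (psi s) <= H0 m n r th p A C K MF Mf) ->
         forall s i j, in_cells m n i j -> psi s i j = phi s i j).
Proof.
  exists phi. split; [apply phi_sol|split; [apply phi_bound|apply phi_unique]].
Qed.

End Main.


Theorem lemma1
  (m n r : nat) (Hm : (1 <= m)%nat) (Hn : (1 <= n)%nat)
  (A : nat -> nat -> R) (C : nat -> nat -> nat -> nat -> R) (f : R -> R)
  (th : Z -> R) (omega : R) (p : nat)
  (Lam : Vec -> Prop) (F : Vec -> Vec) (MF : R)
  (Mf Lf : R) (K : nat -> nat -> R)
  (HA : forall i j, in_cells m n i j -> 0 < A i j)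
  (HC : forall i j h l, in_cells m n i j -> in_cells m n h l -> 0 <= C i j h l)
  (Hf : continuity f)
  (Hth_inc : forall k, th k < th (k + 1)%Z)
  (Hth_m1 : th (-1)%Z < 0) (Hth_0 : 0 < th 0%Z)
  (Homega : 0 < omega)
  (Hper : forall k, th (k + 2 * Z.of_nat p)%Z = th k + omega)
  (HLam : compactV m n Lam)
  (HFmap : forall v, Lam v -> Lam (F v))
  (HFcont : contV_on m n Lam F)
  (HMF : (exists eta0, Lam eta0 /\ vnorm m n (F eta0) = MF) /\
         (forall eta0, Lam eta0 -> vnorm m n (F eta0) <= MF))
  (C1 : forall i j k, in_cells m n i j -> delta th k * A i j <> 1)
  (C2 : 0 < lam m n th p A)
  (C3 : 0 < Mf /\ forall x, Rabs (f x) <= Mf)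
  (C4 : 0 < Lf /\ forall x1 x2, Rabs (f x1 - f x2) <= Lf * Rabs (x1 - x2))
  (HK : forall i j, in_cells m n i j -> 0 < K i j /\
          forall s tau v, tau <= s -> u_val th (A i j) s tau v ->
            Rabs v <= K i j * exp (- lam_ij th p (A i j) * (s - tau)))
  (C5 : Mf * cbar m n r th p A C K < 1 /\
        (Mf + H0 m n r th p A C K MF Mf * Lf) * cbar m n r th p A C K < 1) :
  forall zeta : Z -> Vec, in_Theta m n Lam F zeta ->
    exists phi : R -> Vec,
      is_solution m n r A C f th zeta phi /\
      (forall s, vnorm m n (phi s) <= H0 m n r th p A C K MF Mf) /\
      (forall psi : R -> Vec,
         is_solution m n r A C f th zeta psi ->
         (forall s, vnorm m n (psi s) <= H0 m n r th p A C K MF Mf) ->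
         forall s i j, in_cells m n i j -> psi s i j = phi s i j).
Proof.
  intros zeta Hz.
  exact (main_result m n r Hm Hn A C f th omega p Lam F MF Mf Lf K HC Hf Hth_inc Homega Hper HMF C2 C3 C4 HK C5 zeta Hz).
Qed.
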